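(* Let $\mathcal{C}$ be the class of all spaces homeomorphic to $\kappa\oplus(\lambda\times 2^\omega)\oplus(\mu\times\omega^\omega)$ for some cardinals $0\leq\kappa,\lambda,\mu\leq\omega$ (here $\kappa$, $\lambda$, $\mu$ carry the discrete topology and $\oplus$ denotes topological disjoint sum). Then $\mathcal{C}$ is closed under countable products: if $I$ is countable and $X_i\in\mathcal{C}$ for every $i\in I$, then $\prod_{i\in I}X_i\in\mathcal{C}$.
   Context: $2^\omega$ is the Cantor set and $\omega^\omega$ is the Baire space, both with the product topology. ''Countable'' means ''at most countable''. The empty product is the one-point space. *)

(* Defs.v *)
From Stdlib Require Import List.

Definition opens (T : Type) := (T -> Prop) -> Prop.

Definition is_topology {T : Type} (op : opens T) : Prop :=
  op (fun _ => False) /\ op (fun _ => True) /\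
  (forall U V, op U -> op V -> op (fun x => U x /\ V x)) /\
  (forall (J : Type) (U : J -> T -> Prop),
      (forall j, op (U j)) -> op (fun x => exists j, U j x)).

Definition continuous {A B : Type} (opA : opens A) (opB : opens B)
  (f : A -> B) : Prop :=
  forall V, opB V -> opA (fun a => V (f a)).

Definition homeomorphic {A B : Type} (opA : opens A) (opB : opens B) : Prop :=
  exists (f : A -> B) (g : B -> A),
    (forall a, g (f a) = a) /\ (forall b, f (g b) = b) /\
    continuous opA opB f /\ continuous opB opA g.

Definition countable (I : Type) : Prop :=
  exists f : I -> nat, forall i j, f i = f j -> i = j.

Definition discrete_open (T : Type) : opens T := fun _ => True.

Definition sum_open {A B : Type} (opA : opens A) (opB : opens B) : opens (A + B) :=
  fun U => opA (fun a => U (inl a)) /\ opB (fun b => U (inr b)).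

Definition prod2_open {A B : Type} (opA : opens A) (opB : opens B) : opens (A * B) :=
  fun U => forall p, U p -> exists V W, opA V /\ opB W /\ V (fst p) /\ W (snd p) /\
      (forall a b, V a -> W b -> U (a, b)).

Definition prod_open {I : Type} (T : I -> Type) (op : forall i, opens (T i))
  : opens (forall i, T i) :=
  fun U => forall x, U x ->
    exists (F : list I) (V : forall i, T i -> Prop),
      (forall i, In i F -> op i (V i)) /\
      (forall i, In i F -> V i (x i)) /\
      (forall y : forall i, T i, (forall i, In i F -> V i (y i)) -> U y).

Definition cantor_open : opens (nat -> bool) :=
  @prod_open nat (fun _ => bool) (fun _ => discrete_open bool).
Definition baire_open : opens (nat -> nat) :=
  @prod_open nat (fun _ => nat) (fun _ => discrete_open nat).

(* Cardinals 0 <= kappa <= omega: Some n is the finite cardinal n,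
   None is omega. card_type k is the underlying set of that cardinal. *)
Definition card_type (k : option nat) : Type :=
  match k with
  | Some n => {m : nat | m < n}
  | None => nat
  end.

Definition model_type (k l m : option nat) : Type :=
  card_type k + ((card_type l * (nat -> bool)) + (card_type m * (nat -> nat))).

Definition model_open (k l m : option nat) : opens (model_type k l m) :=
  sum_open (discrete_open (card_type k))
    (sum_open (prod2_open (discrete_open (card_type l)) cantor_open)
              (prod2_open (discrete_open (card_type m)) baire_open)).

Definition in_C {T : Type} (op : opens T) : Prop :=
  exists k l m : option nat, homeomorphic op (model_open k l m).

(* Main.v *)
Require Import Defs.
From Stdlib Require Import List.
From Stdlib Require Import Arith Lia Classical ClassicalEpsilon FunctionalExtensionality ProofIrrelevance Cantor.
Import ListNotations.


Definition ag {A : Type} (n : nat) (f g : nat -> A) : Prop := forall i, i < n -> f i = g i.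

Lemma ag_refl {A} n (f : nat -> A) : ag n f f.
Proof. intros i _; reflexivity. Qed.
Lemma ag_sym {A} n (f g : nat -> A) : ag n f g -> ag n g f.
Proof. intros H i Hi; symmetry; auto. Qed.
Lemma ag_trans {A} n (f g h : nat -> A) : ag n f g -> ag n g h -> ag n f h.
Proof. intros H1 H2 i Hi; rewrite H1; auto. Qed.
Lemma ag_le {A} n m (f g : nat -> A) : m <= n -> ag n f g -> ag m f g.
Proof. intros Hm H i Hi; apply H; lia. Qed.

Section Enc.
Variable X : Type.
Variable enc : X -> nat -> nat.
Definition cyl (x : X) (n : nat) (y : X) : Prop := ag n (enc y) (enc x).
Definition encopen (U : X -> Prop) : Prop :=
  forall x, U x -> exists n, forall y, cyl x n y -> U y.
Definition has_child (x : X) (n j : nat) : Prop := exists y, cyl x n y /\ enc y n = j.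
Definition E3 : Prop := forall g : nat -> nat, (forall n, exists x, ag n (enc x) g) ->
   exists x, forall i, enc x i = g i.
Definition INJ : Prop := forall x y, (forall i, enc x i = enc y i) -> x = y.
End Enc.
Arguments cyl {X} enc x n y.
Arguments encopen {X} enc U.
Arguments has_child {X} enc x n j.
Arguments E3 {X} enc.
Arguments INJ {X} enc.

Lemma cyl_refl {X} (enc : X -> nat -> nat) x n : cyl enc x n x.
Proof. apply ag_refl. Qed.
Lemma cyl_trans {X} (enc : X -> nat -> nat) x n y m z :
  n <= m -> cyl enc x n y -> cyl enc y m z -> cyl enc x n z.
Proof. unfold cyl; intros Hnm H1 H2 i Hi. rewrite H2 by lia. auto. Qed.
Lemma cyl_sym {X} (enc : X -> nat -> nat) x n y : cyl enc x n y -> cyl enc y n x.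
Proof. unfold cyl; intros H i Hi; symmetry; auto. Qed.
Lemma cyl_le {X} (enc : X -> nat -> nat) x n m y : m <= n -> cyl enc x n y -> cyl enc x m y.
Proof. unfold cyl; intros; eapply ag_le; eauto. Qed.

Section Scheme.
Variable X : Type.
Variable enc : X -> nat -> nat.
Hypothesis HE3 : E3 enc.
Hypothesis Hinj : INJ enc.
Variable D : Type.
Variable d0 : D.
Variable next : X * nat -> D -> X * nat.
Variable Inv : X * nat -> Prop.
Variable r : X * nat.
Hypothesis Hr : Inv r.
Hypothesis HInv : forall a d, Inv a -> Inv (next a d).
Definition inn (a : X * nat) (y : X) := cyl enc (fst a) (snd a) y.
Hypothesis S1 : forall a d, Inv a -> snd (next a d) > snd a /\ inn a (fst (next a d)).
Hypothesis S2 : forall a y, Inv a -> inn a y -> exists d, inn (next a d) y.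
Hypothesis S3 : forall a d d' y, Inv a -> inn (next a d) y -> inn (next a d') y -> d = d'.

Definition pick (a : X * nat) (y : X) : D :=
  match excluded_middle_informative (exists d, inn (next a d) y) with
  | left h => proj1_sig (constructive_indefinite_description _ h)
  | right _ => d0 end.

Lemma pick_spec a y : Inv a -> inn a y -> inn (next a (pick a y)) y.
Proof.
  intros Ha Hy. unfold pick. destruct excluded_middle_informative as [h|h].
  - exact (proj2_sig (constructive_indefinite_description _ h)).
  - exfalso; apply h; auto.
Qed.
Lemma pick_uniq a y d : Inv a -> inn (next a d) y -> pick a y = d.
Proof.
  intros Ha Hy. unfold pick. destruct excluded_middle_informative as [h|h].
  - eapply S3; eauto. exact (proj2_sig (constructive_indefinite_description _ h)).
  - exfalso; apply h; eauto.
Qed.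

Fixpoint nd (z : nat -> D) (k : nat) : X * nat :=
  match k with 0 => r | S k => next (nd z k) (z k) end.

Lemma nd_inv z k : Inv (nd z k).
Proof. induction k; simpl; auto. Qed.
Lemma nd_len z k : snd (nd z k) >= k.
Proof. induction k; simpl. lia. destruct (S1 (nd z k) (z k) (nd_inv z k)). lia. Qed.
Lemma nd_mono z k k' : k <= k' -> snd (nd z k) <= snd (nd z k') /\ inn (nd z k) (fst (nd z k')).
Proof.
  induction 1.
  - split; [lia| apply cyl_refl].
  - simpl. destruct (S1 (nd z m) (z m) (nd_inv z m)) as [A B]. destruct IHle as [C E].
    split; [lia|]. eapply cyl_trans; [exact C| exact E| exact B].
Qed.
Lemma nd_sub z k k' y : k <= k' -> inn (nd z k') y -> inn (nd z k) y.
Proof. intros H Hy. destruct (nd_mono z k k' H). eapply cyl_trans; eauto. Qed.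

Lemma nd_ag z z' N : ag N z' z -> forall k, k <= N -> nd z' k = nd z k.
Proof. intros H k; induction k; simpl; intros; auto. rewrite IHk by lia. rewrite H by lia. auto. Qed.

Definition limf (z : nat -> D) (i : nat) : nat := enc (fst (nd z (S i))) i.

Lemma limf_ok z n : exists x, ag n (enc x) (limf z).
Proof.
  exists (fst (nd z n)). intros i Hi. unfold limf.
  destruct (nd_mono z (S i) n ltac:(lia)) as [A B]. apply B. pose proof (nd_len z (S i)). lia.
Qed.

Definition Gm (z : nat -> D) : X :=
  proj1_sig (constructive_indefinite_description _ (HE3 (limf z) (limf_ok z))).
Lemma Gm_spec z i : enc (Gm z) i = limf z i.
Proof. unfold Gm. exact (proj2_sig (constructive_indefinite_description _ (HE3 (limf z) (limf_ok z))) i). Qed.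

Lemma Gm_in z k : inn (nd z k) (Gm z).
Proof.
  intros i Hi. rewrite Gm_spec. unfold limf.
  destruct (le_lt_dec (S i) k).
  - destruct (nd_mono z (S i) k l) as [A B]. symmetry. apply B. pose proof (nd_len z (S i)); lia.
  - destruct (nd_mono z k (S i) ltac:(lia)) as [A B]. apply B. auto.
Qed.

Fixpoint path (y : X) (k : nat) : X * nat :=
  match k with 0 => r | S k => next (path y k) (pick (path y k) y) end.
Definition Fm (y : X) (k : nat) : D := pick (path y k) y.
Lemma path_nd y k : path y k = nd (Fm y) k.
Proof. induction k; simpl; auto. rewrite <- IHk. reflexivity. Qed.

Lemma path_in y : inn r y -> forall k, inn (path y k) y.
Proof.
  intros Hy k; induction k; simpl; auto.
  apply pick_spec; auto. rewrite path_nd. apply nd_inv.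
Qed.

Lemma FG z k : Fm (Gm z) k = z k.
Proof.
  assert (forall k, path (Gm z) k = nd z k).
  { induction k0; simpl; auto. rewrite IHk0. f_equal. apply pick_uniq. apply nd_inv.
    apply (Gm_in z (S k0)). }
  unfold Fm. rewrite H. apply pick_uniq. apply nd_inv. apply (Gm_in z (S k)).
Qed.

Lemma GF y : inn r y -> Gm (Fm y) = y.
Proof.
  intros Hy. apply Hinj. intros i.
  pose proof (Gm_in (Fm y) (S i)) as A. pose proof (path_in y Hy (S i)) as B.
  rewrite path_nd in B. pose proof (nd_len (Fm y) (S i)).
  unfold inn, cyl in *. rewrite A by lia. rewrite B by lia. auto.
Qed.

Lemma G_cont z N z' : ag N z' z -> ag N (enc (Gm z')) (enc (Gm z)).
Proof.
  intros H i Hi. pose proof (nd_ag z z' N H N (le_n _)) as E.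
  pose proof (Gm_in z N) as A. pose proof (Gm_in z' N) as B. rewrite E in B.
  pose proof (nd_len z N). unfold inn, cyl in *. rewrite A, B by lia; auto.
Qed.

Lemma F_cont y : inn r y -> forall k, exists N, forall y', cyl enc y N y' -> ag k (Fm y') (Fm y).
Proof.
  intros Hy k. exists (snd (path y k)). intros y' Hy'.
  assert (Hin : inn (path y k) y').
  { pose proof (path_in y Hy k) as P. intros i Hi. rewrite Hy' by auto. apply P; auto. }
  assert (forall j, j <= k -> path y' j = path y j).
  { induction j; simpl; intros; auto. rewrite IHj by lia.
    f_equal. apply pick_uniq. rewrite path_nd; apply nd_inv.
    change (inn (path y (S j)) y'). rewrite path_nd in Hin |- *. eapply nd_sub; [|exact Hin]. lia. }
  intros i Hi. unfold Fm. rewrite H by lia. apply pick_uniq. rewrite path_nd; apply nd_inv.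
  change (inn (path y (S i)) y'). rewrite path_nd in Hin |- *. eapply nd_sub; [|exact Hin]. lia.
Qed.

Theorem scheme : exists (F : X -> nat -> D) (G : (nat -> D) -> X),
  (forall z, inn r (G z)) /\ (forall z k, F (G z) k = z k) /\
  (forall y, inn r y -> G (F y) = y) /\
  (forall z N z', ag N z' z -> ag N (enc (G z')) (enc (G z))) /\
  (forall y, inn r y -> forall k, exists N, forall y', cyl enc y N y' -> ag k (F y') (F y)).
Proof.
  exists Fm, Gm. repeat split.
  - intros z. exact (Gm_in z 0).
  - apply FG.
  - apply GF.
  - apply G_cont.
  - apply F_cont.
Qed.
End Scheme.


Lemma ex_min (P : nat -> Prop) m : P m -> exists k, P k /\ forall p, p < k -> ~ P p.
Proof.
  revert P. induction m as [m IH] using lt_wf_ind. intros P Hm.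
  destruct (classic (exists p, p < m /\ P p)) as [[p [Hp1 Hp2]]|H].
  - apply (IH p Hp1 P Hp2).
  - exists m; split; auto. intros p Hp Hq; apply H; eauto.
Qed.

Section Types.
Variable X : Type.
Variable enc : X -> nat -> nat.
Definition BR : Prop := forall x n, (forall j, has_child enc x n j -> j <= 1) \/ (forall j, has_child enc x n j).
Definition ISO (x : X) (n : nat) : Prop := forall y y', cyl enc x n y -> cyl enc x n y' -> y = y'.
Definition KK (x : X) (n : nat) : Prop :=
  (forall y m j, n <= m -> cyl enc x n y -> has_child enc y m j -> j <= 1) /\
  (forall y m, n <= m -> cyl enc x n y -> exists z m', m <= m' /\ cyl enc y m z /\
      has_child enc z m' 0 /\ has_child enc z m' 1).
Definition NN (x : X) (n : nat) : Prop :=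
  forall y m, n <= m -> cyl enc x n y -> exists z m', m <= m' /\ cyl enc y m z /\
      forall j, has_child enc z m' j.
End Types.
Arguments BR {X} enc.
Arguments ISO {X} enc x n.
Arguments KK {X} enc x n.
Arguments NN {X} enc x n.

Lemma has_child_mono {X} (enc : X -> nat -> nat) x n y j : cyl enc x n y -> has_child enc y n j -> has_child enc x n j.
Proof. intros H [w [Hw1 Hw2]]. exists w; split; auto. intros i Hi. rewrite Hw1 by auto. auto. Qed.

Lemma KK_her {X} (enc : X -> nat -> nat) x n y m : KK enc x n -> n <= m -> cyl enc x n y -> KK enc y m.
Proof.
  intros [A B] Hm Hy. split.
  - intros y' m' j H1 H2 H3. eapply A; [|eapply cyl_trans; [|exact Hy|exact H2]|exact H3]; lia.
  - intros y' m' H1 H2. eapply B; [|eapply cyl_trans; [|exact Hy|exact H2]]; lia.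
Qed.
Lemma NN_her {X} (enc : X -> nat -> nat) x n y m : NN enc x n -> n <= m -> cyl enc x n y -> NN enc y m.
Proof.
  intros A Hm Hy y' m' H1 H2. eapply A; [|eapply cyl_trans; [|exact Hy|exact H2]]; lia.
Qed.
Lemma ISO_her {X} (enc : X -> nat -> nat) x n y m : ISO enc x n -> n <= m -> cyl enc x n y -> ISO enc y m.
Proof.
  intros A Hm Hy y1 y2 H1 H2. apply A; eapply cyl_trans; eauto.
Qed.

Section Chf.
Variable X : Type.
Variable enc : X -> nat -> nat.
Definition chf (d : nat) (a : X * nat) : X * nat :=
  match excluded_middle_informative (exists w, cyl enc (fst a) (snd a) w /\ enc w (snd a) = d) with
  | left h => (proj1_sig (constructive_indefinite_description _ h), S (snd a))
  | right _ => a end.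
Lemma chf_spec d a : has_child enc (fst a) (snd a) d ->
  snd (chf d a) = S (snd a) /\ cyl enc (fst a) (snd a) (fst (chf d a)) /\ enc (fst (chf d a)) (snd a) = d.
Proof.
  intros H. unfold chf. destruct excluded_middle_informative as [h|h]; [|contradiction].
  destruct (proj2_sig (constructive_indefinite_description _ h)). simpl; auto.
Qed.
Lemma chf_in d a y : has_child enc (fst a) (snd a) d -> cyl enc (fst a) (snd a) y -> enc y (snd a) = d ->
   cyl enc (fst (chf d a)) (snd (chf d a)) y.
Proof.
  intros H Hy Hd. destruct (chf_spec d a H) as [A [B C]]. rewrite A. intros i Hi.
  destruct (Nat.eq_dec i (snd a)). subst; congruence. rewrite Hy by lia. rewrite B by lia. auto.
Qed.
Lemma chf_dig d a y : has_child enc (fst a) (snd a) d -> cyl enc (fst (chf d a)) (snd (chf d a)) y -> enc y (snd a) = d.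
Proof.
  intros H Hy. destruct (chf_spec d a H) as [A [B C]]. rewrite <- C. apply Hy. lia.
Qed.
End Chf.
Arguments chf {X} enc d a.

Definition bn (b : bool) : nat := if b then 1 else 0.

Section TC.
Variable X : Type.
Variable enc : X -> nat -> nat.
Hypothesis HE3 : E3 enc.
Hypothesis Hinj : INJ enc.

Definition brspec (a p : X * nat) : Prop :=
  snd a <= snd p /\ cyl enc (fst a) (snd a) (fst p) /\ has_child enc (fst p) (snd p) 0 /\
  has_child enc (fst p) (snd p) 1 /\ (forall y, cyl enc (fst a) (snd a) y -> cyl enc (fst p) (snd p) y).

Lemma br_exists a : KK enc (fst a) (snd a) -> exists p, brspec a p.
Proof.
  destruct a as [x n]; simpl. intros HK. destruct HK as [A B].
  destruct (B x n (le_n _) (cyl_refl _ _ _)) as [z [m [H1 [H2 [H3 H4]]]]].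
  destruct (ex_min (fun p => n <= p /\ has_child enc z p 0 /\ has_child enc z p 1) m) as [k [[K1 [K2 K3]] K4]].
  { auto. }
  exists (z, k). unfold brspec; simpl. refine (conj _ (conj _ (conj _ (conj _ _)))); auto.
  assert (forall p, n <= p <= k -> forall y, cyl enc x n y -> cyl enc z p y) as HH.
  { intros p [Hp1 Hp2]. induction p as [|p IHp]; intros y Hy.
    - assert (n = 0) by lia. subst. intros i Hi; lia.
    - destruct (Nat.eq_dec n (S p)).
      + subst. intros i Hi. rewrite Hy by lia. rewrite H2 by lia. auto.
      + assert (Hyp : cyl enc z p y) by (apply IHp; auto; lia).
        assert (Hzp : cyl enc x n z) by auto.
        intros i Hi. destruct (Nat.eq_dec i p).
        * subst i. 
          assert (Cy : has_child enc z p (enc y p)) by (exists y; split; auto).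
          assert (Cz : has_child enc z p (enc z p)) by (exists z; split; [apply cyl_refl|auto]).
          assert (Ly : enc y p <= 1). { eapply (A z p); eauto; lia. }
          assert (Lz : enc z p <= 1). { eapply (A z p); eauto; lia. }
          destruct (Nat.eq_dec (enc y p) (enc z p)); auto.
          exfalso. apply (K4 p); [lia|]. split; [lia|].
          destruct (enc y p) as [|[|]] eqn:E1; destruct (enc z p) as [|[|]] eqn:E2; try lia;
            split; auto.
        * apply Hyp; lia. }
  intros y Hy. apply HH; auto; lia.
Qed.

Definition brf (a : X * nat) : X * nat :=
  match excluded_middle_informative (exists p, brspec a p) with
  | left h => proj1_sig (constructive_indefinite_description _ h)
  | right _ => a end.
Lemma brf_spec a : KK enc (fst a) (snd a) -> brspec a (brf a).
Proof.
  intros H. unfold brf. destruct excluded_middle_informative as [h|h].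
  - exact (proj2_sig (constructive_indefinite_description _ h)).
  - exfalso; apply h; apply br_exists; auto.
Qed.

Definition nextC (a : X * nat) (b : bool) : X * nat := brf (chf enc (bn b) (brf a)).
Definition InvK (a : X * nat) : Prop := KK enc (fst a) (snd a).

Lemma bn_le b : bn b <= 1. Proof. destruct b; simpl; lia. Qed.

Lemma nextC_facts a b : InvK a ->
  let p := brf a in let c := chf enc (bn b) p in
  brspec a p /\ snd c = S (snd p) /\ cyl enc (fst p) (snd p) (fst c) /\ enc (fst c) (snd p) = bn b /\
  InvK c /\ brspec c (nextC a b) /\ InvK (nextC a b).
Proof.
  intros Ha p c. assert (Hp : brspec a p) by (apply brf_spec; auto).
  destruct Hp as [P1 [P2 [P3 [P4 P5]]]].
  assert (Hc : has_child enc (fst p) (snd p) (bn b)) by (destruct b; auto).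
  destruct (chf_spec X enc (bn b) p Hc) as [C1 [C2 C3]]. fold c in C1, C2, C3.
  assert (IC : InvK c).
  { unfold InvK. eapply KK_her; [exact Ha| |]. rewrite C1; lia. eapply cyl_trans; [|exact P2|exact C2]; auto. }
  assert (Hn : brspec c (nextC a b)) by (apply brf_spec; auto).
  refine (conj (brf_spec a Ha) (conj C1 (conj C2 (conj C3 (conj IC (conj Hn _)))))).
  destruct Hn as [N1 [N2 _]]. eapply KK_her; [exact IC|exact N1|exact N2].
Qed.

Theorem TC_thm (x0 : X) (n0 : nat) : KK enc x0 n0 ->
  exists (F : X -> nat -> bool) (G : (nat -> bool) -> X),
  (forall z, cyl enc x0 n0 (G z)) /\ (forall z k, F (G z) k = z k) /\
  (forall y, cyl enc x0 n0 y -> G (F y) = y) /\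
  (forall z N z', ag N z' z -> ag N (enc (G z')) (enc (G z))) /\
  (forall y, cyl enc x0 n0 y -> forall k, exists N, forall y', cyl enc y N y' -> ag k (F y') (F y)).
Proof.
  intros HK.
  refine (scheme X enc HE3 Hinj bool true nextC InvK (x0, n0) HK _ _ _ _).
  - intros a d Ha. destruct (nextC_facts a d Ha) as [_ [_ [_ [_ [_ [_ H]]]]]]; auto.
  - intros a d Ha. destruct (nextC_facts a d Ha) as [[P1 [P2 _]] [C1 [C2 [C3 [IC [[N1 [N2 _]] _]]]]]].
    split. lia.
    unfold inn. eapply cyl_trans; [exact P1|exact P2|]. eapply cyl_trans; [|exact C2|exact N2]. lia.
  - intros a y Ha Hy. unfold inn in *.
    destruct (brf_spec a Ha) as [P1 [P2 [P3 [P4 P5]]]].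
    assert (Hyp := P5 y Hy).
    assert (Ly : enc y (snd (brf a)) <= 1).
    { destruct Ha as [A _]. eapply (A (fst (brf a)) (snd (brf a))); auto. exists y; split; auto. }
    exists (if Nat.eq_dec (enc y (snd (brf a))) 1 then true else false).
    destruct (nextC_facts a (if Nat.eq_dec (enc y (snd (brf a))) 1 then true else false) Ha)
      as [_ [C1 [C2 [C3 [IC [[N1 [N2 [_ [_ N5]]]] _]]]]]].
    apply N5. apply chf_in; auto.
    + destruct (Nat.eq_dec (enc y (snd (brf a))) 1); simpl; auto.
    + destruct (Nat.eq_dec (enc y (snd (brf a))) 1); simpl; lia.
  - intros a d d' y Ha H1 H2. unfold inn in *.
    destruct (nextC_facts a d Ha) as [_ [C1 [C2 [C3 [IC [[N1 [N2 _]] _]]]]]].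
    destruct (nextC_facts a d' Ha) as [_ [D1 [D2 [D3 [ID [[M1 [M2 _]] _]]]]]].
    assert (E1 : enc y (snd (brf a)) = bn d).
    { rewrite <- C3. rewrite <- (N2 (snd (brf a))) by lia. apply H1. lia. }
    assert (E2 : enc y (snd (brf a)) = bn d').
    { rewrite <- D3. rewrite <- (M2 (snd (brf a))) by lia. apply H2. lia. }
    rewrite E1 in E2. destruct d, d'; simpl in E2; congruence.
Qed.
End TC.


Section TB.
Variable X : Type.
Variable enc : X -> nat -> nat.
Hypothesis HE3 : E3 enc.
Hypothesis Hinj : INJ enc.
Hypothesis HBR : BR enc.

Definition omspec (a p : X * nat) : Prop :=
  snd a <= snd p /\ cyl enc (fst a) (snd a) (fst p) /\ (forall j, has_child enc (fst p) (snd p) j) /\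
  (forall q, snd a <= q < snd p -> forall j, has_child enc (fst p) q j -> j <= 1).

Lemma om_exists a : NN enc (fst a) (snd a) -> exists p, omspec a p.
Proof.
  destruct a as [x n]; simpl. intros HN.
  destruct (HN x n (le_n _) (cyl_refl _ _ _)) as [z [m [H1 [H2 H3]]]].
  destruct (ex_min (fun p => n <= p /\ forall j, has_child enc z p j) m) as [k [[K1 K2] K3]].
  { auto. }
  exists (z, k). unfold omspec; simpl. refine (conj K1 (conj H2 (conj K2 _))).
  intros q Hq j Hj. destruct (HBR z q) as [A|A].
  - eauto.
  - exfalso. apply (K3 q); [lia|]. split; [lia|auto].
Qed.

Definition omf (a : X * nat) : X * nat :=
  match excluded_middle_informative (exists p, omspec a p) with
  | left h => proj1_sig (constructive_indefinite_description _ h)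
  | right _ => a end.
Lemma omf_spec a : NN enc (fst a) (snd a) -> omspec a (omf a).
Proof.
  intros H. unfold omf. destruct excluded_middle_informative as [h|h].
  - exact (proj2_sig (constructive_indefinite_description _ h)).
  - exfalso; apply h; apply om_exists; auto.
Qed.

Fixpoint pcf (z : X) (k p j : nat) {struct k} : X * nat :=
  match k with
  | 0 => chf enc j (z, p)
  | S k' => if excluded_middle_informative (has_child enc z p (1 - enc z p)) then
       match j with 0 => chf enc (1 - enc z p) (z, p) | S j' => pcf z k' (S p) j' end
     else pcf z k' (S p) j
  end.

Definition innB (a : X * nat) (y : X) := cyl enc (fst a) (snd a) y.

Lemma pcf_ok z k : forall p, (forall j, has_child enc z (p + k) j) ->
  (forall q, p <= q < p + k -> forall j, has_child enc z q j -> j <= 1) ->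
  (forall j, snd (pcf z k p j) > p /\ cyl enc z p (fst (pcf z k p j))) /\
  (forall y, cyl enc z p y -> exists j, innB (pcf z k p j) y) /\
  (forall j j' y, innB (pcf z k p j) y -> innB (pcf z k p j') y -> j = j').
Proof.
  induction k as [|k IH]; intros p Hom Hr.
  - rewrite Nat.add_0_r in Hom. simpl. split; [|split].
    + intros j. destruct (chf_spec X enc j (z, p) (Hom j)) as [A [B C]]. simpl in *. split; [lia|auto].
    + intros y Hy. exists (enc y p). unfold innB. apply chf_in; auto.
    + intros j j' y H1 H2. unfold innB in *.
      pose proof (chf_dig X enc j (z,p) y (Hom j) H1). pose proof (chf_dig X enc j' (z,p) y (Hom j') H2).
      simpl in *. congruence.
  - destruct (IH (S p)) as [IA [IB IC]].
    { intros j. replace (S p + k) with (p + S k) by lia. auto. }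
    { intros q Hq. apply Hr. lia. }
    assert (Lz : enc z p <= 1). { apply (Hr p); [lia|]. exists z; split; [apply cyl_refl|auto]. }
    assert (Ly : forall y, cyl enc z p y -> enc y p <= 1).
    { intros y Hy. apply (Hr p); [lia|]. exists y; split; auto. }
    assert (Hsub : forall j y, innB (pcf z k (S p) j) y -> enc y p = enc z p).
    { intros j y Hy. destruct (IA j) as [A B]. unfold innB in Hy. rewrite Hy by lia. apply B. lia. }
    assert (HS : forall y, cyl enc z p y -> enc y p = enc z p -> cyl enc z (S p) y).
    { intros y Hy E i Hi. destruct (Nat.eq_dec i p). subst; auto. apply Hy; lia. }
    assert (Eo : (match enc z p with 0 => 1 | S _ => 0 end) = 1 - enc z p) by (destruct (enc z p); reflexivity).
    simpl. rewrite Eo. destruct excluded_middle_informative as [Ho|Ho].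
    + split; [|split].
      * intros [|j].
        -- destruct (chf_spec X enc _ (z,p) Ho) as [A [B C]]. simpl in *. split; [lia|auto].
        -- destruct (IA j) as [A B]. split; [lia|]. eapply cyl_le; [|exact B]. lia.
      * intros y Hy. destruct (Nat.eq_dec (enc y p) (enc z p)) as [E|E].
        -- destruct (IB y (HS y Hy E)) as [j Hj]. exists (S j). auto.
        -- exists 0. unfold innB. apply chf_in; [exact Ho|exact Hy|]. change (enc y p = 1 - enc z p). pose proof (Ly y Hy). lia.
      * intros [|j] [|j'] y H1 H2; auto.
        -- exfalso. pose proof (chf_dig X enc _ (z,p) y Ho H1). pose proof (Hsub _ _ H2). cbn [fst snd] in *. lia.
        -- exfalso. pose proof (chf_dig X enc _ (z,p) y Ho H2). pose proof (Hsub _ _ H1). cbn [fst snd] in *. lia.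
        -- f_equal. eauto.
    + split; [|split].
      * intros j. destruct (IA j) as [A B]. split; [lia|]. eapply cyl_le; [|exact B]. lia.
      * intros y Hy. apply IB. apply HS; auto.
        destruct (Nat.eq_dec (enc y p) (enc z p)) as [E|E]; auto.
        exfalso. apply Ho. exists y. split; auto. pose proof (Ly y Hy). lia.
      * auto.
Qed.

Definition nextB (a : X * nat) (j : nat) : X * nat :=
  pcf (fst (omf a)) (snd (omf a) - snd a) (snd a) j.
Definition InvN (a : X * nat) : Prop := NN enc (fst a) (snd a).

Lemma nextB_ok a : InvN a ->
  (forall j, snd (nextB a j) > snd a /\ cyl enc (fst a) (snd a) (fst (nextB a j))) /\
  (forall y, cyl enc (fst a) (snd a) y -> exists j, innB (nextB a j) y) /\
  (forall j j' y, innB (nextB a j) y -> innB (nextB a j') y -> j = j').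
Proof.
  intros Ha. destruct (omf_spec a Ha) as [O1 [O2 [O3 O4]]].
  destruct (pcf_ok (fst (omf a)) (snd (omf a) - snd a) (snd a)) as [A [B C]].
  { intros j. replace (snd a + (snd (omf a) - snd a)) with (snd (omf a)) by lia. auto. }
  { intros q Hq. apply O4. lia. }
  unfold nextB. split; [|split].
  - intros j. destruct (A j) as [A1 A2]. split; auto. eapply cyl_trans; [|exact O2|exact A2]. lia.
  - intros y Hy. apply B. intros i Hi. rewrite Hy by auto. symmetry. apply O2. auto.
  - auto.
Qed.

Theorem TB_thm (x0 : X) (n0 : nat) : NN enc x0 n0 ->
  exists (F : X -> nat -> nat) (G : (nat -> nat) -> X),
  (forall z, cyl enc x0 n0 (G z)) /\ (forall z k, F (G z) k = z k) /\
  (forall y, cyl enc x0 n0 y -> G (F y) = y) /\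
  (forall z N z', ag N z' z -> ag N (enc (G z')) (enc (G z))) /\
  (forall y, cyl enc x0 n0 y -> forall k, exists N, forall y', cyl enc y N y' -> ag k (F y') (F y)).
Proof.
  intros HN.
  refine (scheme X enc HE3 Hinj nat 0 nextB InvN (x0, n0) HN _ _ _ _).
  - intros a d Ha. destruct (nextB_ok a Ha) as [A _]. destruct (A d) as [A1 A2].
    unfold InvN. eapply NN_her; [exact Ha| |exact A2]. lia.
  - intros a d Ha. destruct (nextB_ok a Ha) as [A _]. destruct (A d); split; auto.
  - intros a y Ha Hy. destruct (nextB_ok a Ha) as [_ [B _]]. apply B; auto.
  - intros a d d' y Ha H1 H2. destruct (nextB_ok a Ha) as [_ [_ C]]. eapply C; eauto.
Qed.
End TB.


Definition sapp (l : list nat) (s : nat -> nat) (i : nat) : nat :=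
  if i <? length l then nth i l 0 else s (i - length l).
Lemma sapp_lt l s i : i < length l -> sapp l s i = nth i l 0.
Proof. intros H. unfold sapp. destruct (Nat.ltb_spec i (length l)); auto; lia. Qed.
Lemma sapp_ge l s i : sapp l s (length l + i) = s i.
Proof. unfold sapp. destruct (Nat.ltb_spec (length l + i) (length l)); [lia|]. f_equal; lia. Qed.

Definition code (c : nat) : list nat := repeat 1 c ++ [0].
Lemma code_len c : length (code c) = S c.
Proof. unfold code. rewrite length_app, repeat_length. simpl. lia. Qed.
Lemma nth_code_lt c i : i < c -> nth i (code c) 0 = 1.
Proof. unfold code. intros H. rewrite app_nth1 by (rewrite repeat_length; auto). apply nth_repeat_lt; auto. Qed.
Lemma nth_code_eq c : nth c (code c) 0 = 0.
Proof. unfold code. rewrite app_nth2 by (rewrite repeat_length; auto). rewrite repeat_length, Nat.sub_diag. auto. Qed.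

Definition sc (c : nat) (t : nat -> nat) : nat -> nat := sapp (code c) t.
Lemma sc_lt c t i : i < c -> sc c t i = 1.
Proof. intros H. unfold sc. rewrite sapp_lt by (rewrite code_len; lia). apply nth_code_lt; auto. Qed.
Lemma sc_eq c t : sc c t c = 0.
Proof. unfold sc. rewrite sapp_lt by (rewrite code_len; lia). apply nth_code_eq. Qed.
Lemma sc_sh c t i : sc c t (S c + i) = t i.
Proof. unfold sc. rewrite <- (code_len c). apply sapp_ge. Qed.
Lemma sc_low c t t' i : i < S c -> sc c t i = sc c t' i.
Proof. intros H. unfold sc. rewrite !sapp_lt by (rewrite code_len; lia). auto. Qed.

Lemma code_det c c' t t' : ag (S c) (sc c' t') (sc c t) -> c' = c.
Proof.
  intros H. destruct (lt_eq_lt_dec c' c) as [[Hl|He]|Hl]; auto.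
  - specialize (H c' ltac:(lia)). rewrite sc_eq, sc_lt in H by auto. discriminate.
  - specialize (H c ltac:(lia)). rewrite sc_eq, sc_lt in H by auto. discriminate.
Qed.
Lemma code_ones c t n : (forall i, i < n -> sc c t i = 1) -> n <= c.
Proof. intros H. destruct (le_lt_dec n c); auto. specialize (H c l). rewrite sc_eq in H. discriminate. Qed.
Lemma sc_le1 c t n : n <= c -> sc c t n <= 1.
Proof. intros H. destruct (Nat.eq_dec n c). subst; rewrite sc_eq; lia. rewrite sc_lt by lia; lia. Qed.
Lemma sc_ag c t t' N : ag (S c + N) (sc c t') (sc c t) <-> ag N t' t.
Proof.
  split.
  - intros H i Hi. rewrite <- (sc_sh c t' i), <- (sc_sh c t i). apply H. lia.
  - intros H i Hi. destruct (le_lt_dec (S c) i).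
    + replace i with (S c + (i - S c)) by lia. rewrite !sc_sh. apply H. lia.
    + apply sc_low; auto.
Qed.

Definition icode (c : option nat) : card_type c -> list nat :=
  match c with Some n => fun a => code (proj1_sig a) | None => fun a => [a] end.
Definition ilen (c : option nat) (a : card_type c) : nat := length (icode c a).
Definition cb (c : option nat) : nat := match c with Some n => n | None => 1 end.
Lemma ilen_le c a : ilen c a <= cb c.
Proof. destruct c; simpl in *; unfold ilen; simpl. destruct a; simpl; rewrite code_len; lia. lia. Qed.
Lemma ilen_pos c a : 1 <= ilen c a.
Proof. destruct c; unfold ilen; simpl. rewrite code_len; lia. lia. Qed.

Lemma icode_det c a a' t t' : ag (ilen c a) (sapp (icode c a') t') (sapp (icode c a) t) -> a' = a.
Proof.
  destruct c as [n|]; simpl in *; unfold ilen; simpl.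
  - destruct a as [a Ha], a' as [a' Ha']; simpl. rewrite code_len. intros H.
    assert (a' = a) by (eapply code_det; exact H). subst. f_equal. apply proof_irrelevance.
  - intros H. specialize (H 0 ltac:(lia)). unfold sapp in H. simpl in H. auto.
Qed.

Lemma sapp_ag l t t' N : ag (length l + N) (sapp l t') (sapp l t) <-> ag N t' t.
Proof.
  split.
  - intros H i Hi. rewrite <- (sapp_ge l t' i), <- (sapp_ge l t i). apply H. lia.
  - intros H i Hi. destruct (le_lt_dec (length l) i).
    + replace i with (length l + (i - length l)) by lia. rewrite !sapp_ge. apply H. lia.
    + rewrite !sapp_lt; auto.
Qed.

Section Model.
Variables k l m : option nat.
Notation M := (model_type k l m).

Definition menc (p : M) : nat -> nat :=
  match p with
  | inl a => sc 0 (sapp (icode k a) (fun _ => 0))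
  | inr (inl (a, x)) => sc 1 (sapp (icode l a) (fun i => bn (x i)))
  | inr (inr (a, y)) => sc 2 (sapp (icode m a) y)
  end.
Definition hlen (p : M) : nat :=
  match p with
  | inl a => 1 + ilen k a
  | inr (inl (a, _)) => 2 + ilen l a
  | inr (inr (a, _)) => 3 + ilen m a
  end.

Lemma same_K a q : cyl menc (inl a) (hlen (inl a)) q -> q = inl a.
Proof.
  unfold cyl; simpl. intros H.
  destruct q as [a'|[[a' x']|[a' y']]]; simpl in H.
  - f_equal. apply (icode_det k a a' (fun _ => 0) (fun _ => 0)). apply (sc_ag 0). exact H.
  - exfalso. assert (1 = 0) by (eapply (code_det 0 1); eapply ag_le; [|exact H]; lia). lia.
  - exfalso. assert (2 = 0) by (eapply (code_det 0 2); eapply ag_le; [|exact H]; lia). lia.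
Qed.

Lemma same_L a x q : cyl menc (inr (inl (a, x))) (hlen (inr (inl (a, x)))) q ->
  exists x', q = inr (inl (a, x')).
Proof.
  unfold cyl; simpl. intros H.
  destruct q as [a'|[[a' x']|[a' y']]]; simpl in H.
  - exfalso. assert (0 = 1) by (eapply (code_det 1 0); eapply ag_le; [|exact H]; lia). lia.
  - exists x'. do 3 f_equal. eapply (icode_det l a a'). apply (sc_ag 1). exact H.
  - exfalso. assert (2 = 1) by (eapply (code_det 1 2); eapply ag_le; [|exact H]; lia). lia.
Qed.

Lemma same_M a y q : cyl menc (inr (inr (a, y))) (hlen (inr (inr (a, y)))) q ->
  exists y', q = inr (inr (a, y')).
Proof.
  unfold cyl; simpl. intros H.
  destruct q as [a'|[[a' x']|[a' y']]]; simpl in H.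
  - exfalso. assert (0 = 2) by (eapply (code_det 2 0); eapply ag_le; [|exact H]; lia). lia.
  - exfalso. assert (1 = 2) by (eapply (code_det 2 1); eapply ag_le; [|exact H]; lia). lia.
  - exists y'. do 3 f_equal. eapply (icode_det m a a'). apply (sc_ag 2). exact H.
Qed.

Lemma ag_L a x x' N : ag (hlen (inr (inl (a, x))) + N) (menc (inr (inl (a, x')))) (menc (inr (inl (a, x))))
   <-> ag N x' x.
Proof.
  simpl. replace (S (S (ilen l a + N))) with (S 1 + (length (icode l a) + N)) by (unfold ilen; lia).
  rewrite sc_ag, sapp_ag. split.
  - intros H i Hi. specialize (H i Hi). cbv beta in H. destruct (x' i), (x i); simpl in H; congruence.
  - intros H i Hi. rewrite H; auto.
Qed.
Lemma ag_M a y y' N : ag (hlen (inr (inr (a, y))) + N) (menc (inr (inr (a, y')))) (menc (inr (inr (a, y))))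
   <-> ag N y' y.
Proof.
  simpl. replace (S (S (S (ilen m a + N)))) with (S 2 + (length (icode m a) + N)) by (unfold ilen; lia).
  rewrite sc_ag, sapp_ag. tauto.
Qed.
Lemma pay_K a j : menc (inl a) (hlen (inl a) + j) = 0.
Proof. simpl. replace (S (ilen k a + j)) with (S 0 + (length (icode k a) + j)) by (unfold ilen; lia).
  rewrite sc_sh, sapp_ge. auto. Qed.
Lemma pay_L a x j : menc (inr (inl (a, x))) (hlen (inr (inl (a, x))) + j) = bn (x j).
Proof. simpl. replace (S (S (ilen l a + j))) with (S 1 + (length (icode l a) + j)) by (unfold ilen; lia).
  rewrite sc_sh, sapp_ge. auto. Qed.
Lemma pay_M a y j : menc (inr (inr (a, y))) (hlen (inr (inr (a, y))) + j) = y j.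
Proof. simpl. replace (S (S (S (ilen m a + j)))) with (S 2 + (length (icode m a) + j)) by (unfold ilen; lia).
  rewrite sc_sh, sapp_ge. auto. Qed.

Lemma hlen_le p : hlen p <= 3 + cb k + cb l + cb m.
Proof. destruct p as [a|[[a x]|[a y]]]; simpl; pose proof (ilen_le k) ; pose proof (ilen_le l); pose proof (ilen_le m);
  specialize (H a) || specialize (H0 a) || specialize (H1 a); try (specialize (H0 a)); try (specialize (H1 a)); lia. Qed.
End Model.


Lemma in_le_max i F : In i F -> i <= list_max F.
Proof. intros H. assert (HH := proj1 (list_max_le F (list_max F)) (le_n _)).
  rewrite Forall_forall in HH. auto. Qed.

Lemma prod_disc_iff {A : Type} (V : (nat -> A) -> Prop) :
  prod_open (fun _ : nat => A) (fun _ => discrete_open A) V <->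
  (forall x, V x -> exists K, forall y, ag K y x -> V y).
Proof.
  split.
  - intros H x Hx. destruct (H x Hx) as [F [W [W1 [W2 W3]]]].
    exists (S (list_max F)). intros y Hy. apply W3. intros i Hi.
    rewrite Hy. auto. pose proof (in_le_max i F Hi). lia.
  - intros H x Hx. destruct (H x Hx) as [K HK].
    exists (seq 0 K), (fun i a => a = x i). split; [|split].
    + intros; exact I.
    + intros; auto.
    + intros y Hy. apply HK. intros i Hi. apply Hy. apply in_seq. lia.
Qed.

Lemma head_left_tag c c' t t' n : n <= c -> ag n (sc c' t') (sc c t) -> sc c' t' n <= 1.
Proof.
  intros Hn H. apply sc_le1. apply (code_ones c' t'). intros i Hi. rewrite H by auto. apply sc_lt. lia.
Qed.

Definition upd (y : nat -> nat) (t j : nat) : nat -> nat := fun i => if Nat.eqb i t then j else y i.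
Definition updb (y : nat -> bool) (t : nat) (j : bool) : nat -> bool := fun i => if Nat.eqb i t then j else y i.
Lemma upd_ag y t j : ag t (upd y t j) y.
Proof. intros i Hi. unfold upd. destruct (Nat.eqb_spec i t); auto; lia. Qed.
Lemma updb_ag y t j : ag t (updb y t j) y.
Proof. intros i Hi. unfold updb. destruct (Nat.eqb_spec i t); auto; lia. Qed.

Section Model2.
Variables k l m : option nat.
Notation M := (model_type k l m).
Notation menc := (menc k l m).
Notation hlen := (hlen k l m).

Definition tag (p : M) : nat := match p with inl _ => 0 | inr (inl _) => 1 | inr (inr _) => 2 end.
Definition rest (p : M) : nat -> nat :=
  match p with
  | inl a => sapp (icode k a) (fun _ => 0)
  | inr (inl (a, x)) => sapp (icode l a) (fun i => bn (x i))
  | inr (inr (a, y)) => sapp (icode m a) y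
  end.
Lemma menc_eq p i : menc p i = sc (tag p) (rest p) i.
Proof. destruct p as [a|[[a x]|[a y]]]; reflexivity. Qed.
Lemma hlen_eq p : hlen p = S (tag p) + match p with inl a => ilen k a | inr (inl (a, _)) => ilen l a
   | inr (inr (a, _)) => ilen m a end.
Proof. destruct p as [a|[[a x]|[a y]]]; simpl; lia. Qed.

Lemma left_tag p n : n <= tag p -> forall j, has_child menc p n j -> j <= 1.
Proof.
  intros Hn j [q [Hq Hj]]. subst j. rewrite menc_eq. eapply (head_left_tag (tag p)); eauto.
  intros i Hi. rewrite <- !menc_eq. apply Hq; auto.
Qed.
Lemma tag_same p q n : S (tag p) <= n -> cyl menc p n q -> tag q = tag p.
Proof.
  intros Hn H. apply (code_det (tag p) (tag q) (rest p) (rest q)). intros i Hi.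
  rewrite <- !menc_eq. apply H; lia.
Qed.
Lemma rest_ag p q N : cyl menc p (S (tag p) + N) q -> tag q = tag p -> ag N (rest q) (rest p).
Proof.
  intros H E. apply (sc_ag (tag p)). intros i Hi. rewrite <- E at 1. rewrite <- !menc_eq. apply H; auto.
Qed.

Lemma M_inj : INJ menc.
Proof.
  intros p q H.
  assert (Hc : forall N, cyl menc p N q) by (intros N i Hi; symmetry; auto).
  destruct p as [a|[[a x]|[a y]]].
  - symmetry. apply same_K. apply Hc.
  - destruct (same_L k l m a x q (Hc _)) as [x' E]. subst q. f_equal; f_equal; f_equal.
    apply functional_extensionality. intros i. symmetry.
    apply (proj1 (ag_L k l m a x x' (S i)) (Hc _)). lia.
  - destruct (same_M k l m a y q (Hc _)) as [y' E]. subst q. f_equal; f_equal; f_equal.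
    apply functional_extensionality. intros i. symmetry.
    apply (proj1 (ag_M k l m a y y' (S i)) (Hc _)). lia.
Qed.

Lemma M_E3 : E3 menc.
Proof.
  intros g Hg. set (B := 3 + cb k + cb l + cb m).
  destruct (Hg B) as [p0 Hp0].
  assert (Hs : forall i, exists p', ag (S i) (menc p') g /\ cyl menc p0 (hlen p0) p').
  { intros i. destruct (Hg (B + S i)) as [p' Hp']. exists p'. split.
    - eapply ag_le; [|exact Hp']. lia.
    - intros j Hj. pose proof (hlen_le k l m p0). rewrite Hp' by lia. rewrite Hp0 by (unfold B; lia). auto. }
  destruct p0 as [a|[[a x]|[a y]]].
  - exists (inl a). intros i. destruct (Hs i) as [p' [H1 H2]]. apply same_K in H2. subst p'. apply H1. lia.
  - set (h := hlen (inr (inl (a, x)))).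
    assert (P : forall x0 j, menc (inr (inl (a, x0))) (h + j) = bn (x0 j)) by (intros; apply pay_L).
    exists (inr (inl (a, fun j => Nat.eqb (g (h + j)) 1))).
    intros i. destruct (Hs i) as [p' [H1 H2]]. destruct (same_L k l m a x p' H2) as [x' E]. subst p'.
    destruct (le_lt_dec h i).
    + replace i with (h + (i - h)) by lia. rewrite P. cbv beta.
      rewrite <- (H1 (h + (i - h))) by lia. rewrite P. destruct (x' _); reflexivity.
    + rewrite <- (H1 i) by lia.
      apply (proj2 (ag_L k l m a x' (fun j => Nat.eqb (g (h + j)) 1) 0)). intros ? ?; exfalso; lia. change (i < h + 0); lia.
  - set (h := hlen (inr (inr (a, y)))).
    assert (P : forall y0 j, menc (inr (inr (a, y0))) (h + j) = y0 j) by (intros; apply pay_M).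
    exists (inr (inr (a, fun j => g (h + j)))).
    intros i. destruct (Hs i) as [p' [H1 H2]]. destruct (same_M k l m a y p' H2) as [y' E]. subst p'.
    destruct (le_lt_dec h i).
    + replace i with (h + (i - h)) by lia. rewrite P. reflexivity.
    + rewrite <- (H1 i) by lia.
      apply (proj2 (ag_M k l m a y' (fun j => g (h + j)) 0)). intros ? ?; exfalso; lia. change (i < h + 0); lia.
Qed.
End Model2.


Section Model3.
Variables k l m : option nat.
Notation M := (model_type k l m).
Notation menc := (menc k l m).
Notation hlen := (hlen k l m).
Notation tag := (tag k l m).
Notation rest := (rest k l m).

Lemma digit_rest q t : menc q (S (tag q) + t) = rest q t.
Proof. rewrite menc_eq. apply sc_sh. Qed.

Lemma idx_left p n c tp : (forall i, rest p i = sc c tp i) -> S (tag p) <= n -> n - S (tag p) <= c ->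
  forall q c' tq, cyl menc p n q -> (forall i, rest q i = sc c' tq i) -> menc q n <= 1.
Proof.
  intros Hr Hn1 Hn2 q c' tq Hq Hrq.
  assert (E : tag q = tag p) by (eapply tag_same; eauto).
  replace n with (S (tag q) + (n - S (tag p))) by lia. rewrite digit_rest. rewrite Hrq.
  eapply (head_left_tag c); auto.
  intros i Hi. rewrite <- Hrq, <- Hr. apply (rest_ag k l m p q (n - S (tag p))); auto.
  eapply cyl_le; [|exact Hq]. lia.
Qed.

Lemma cyl_le' p n q : n <= hlen p -> (forall i, i < n -> menc q i = menc p i) -> cyl menc p n q.
Proof. intros _ H; exact H. Qed.

End Model3.

Lemma M_BR k l m : BR (menc k l m).
Proof.
  intros p n. destruct (le_lt_dec n (tag k l m p)) as [Hn|Hn].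
  { left. apply (left_tag k l m); auto. }
  destruct p as [a|[[a x]|[a y]]]; simpl in Hn.
  - destruct (le_lt_dec (hlen k l m (inl a)) n) as [Hh|Hh].
    + left. intros j [q [Hq Hj]]. subst j. assert (E := same_K k l m a q (cyl_le _ _ _ _ _ Hh Hq)). subst q.
      replace n with (hlen k l m (inl a) + (n - hlen k l m (inl a))) by lia. rewrite pay_K. lia.
    + destruct k as [nn|] eqn:Ek.
      * left. intros j [q [Hq Hj]]. subst j.
        destruct q as [a'|[[a' x']|[a' y']]].
        -- eapply (idx_left _ _ _ (inl a) n (proj1_sig a) (fun _ => 0)); simpl; eauto; try (intros; reflexivity).
           simpl in Hh. unfold ilen in Hh. simpl in Hh. rewrite code_len in Hh. lia.
        -- exfalso. pose proof (tag_same _ _ _ (inl a) _ n ltac:(simpl; lia) Hq). simpl in H. lia.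
        -- exfalso. pose proof (tag_same _ _ _ (inl a) _ n ltac:(simpl; lia) Hq). simpl in H. lia.
      * right. simpl in Hh. unfold ilen in Hh. simpl in Hh. assert (n = 1) by lia. subst n.
        intros j. exists (inl j). split; [|reflexivity].
        intros i Hi. assert (i = 0) by lia. subst. reflexivity.
  - destruct (le_lt_dec (hlen k l m (inr (inl (a, x)))) n) as [Hh|Hh].
    + left. intros j [q [Hq Hj]]. subst j.
      destruct (same_L k l m a x q (cyl_le _ _ _ _ _ Hh Hq)) as [x' E]. subst q.
      replace n with (hlen k l m (inr (inl (a, x))) + (n - hlen k l m (inr (inl (a, x))))) by lia.
      assert (HH := pay_L k l m a x' (n - hlen k l m (inr (inl (a, x))))). simpl hlen in HH |- *. rewrite HH.
      destruct (x' _); simpl; lia.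
    + destruct l as [nn|] eqn:El.
      * left. intros j [q [Hq Hj]]. subst j.
        destruct q as [a'|[[a' x']|[a' y']]].
        -- exfalso. pose proof (tag_same _ _ _ (inr (inl (a, x))) _ n ltac:(simpl; lia) Hq). simpl in H. lia.
        -- eapply (idx_left _ _ _ (inr (inl (a, x))) n (proj1_sig a) (fun i => bn (x i))); simpl; eauto; try (intros; reflexivity).
           simpl in Hh. unfold ilen in Hh. simpl in Hh. rewrite code_len in Hh. lia.
        -- exfalso. pose proof (tag_same _ _ _ (inr (inl (a, x))) _ n ltac:(simpl; lia) Hq). simpl in H. lia.
      * right. simpl in Hh. unfold ilen in Hh. simpl in Hh. assert (n = 2) by lia. subst n.
        intros j. exists (inr (inl (j, x))). split; [|reflexivity].
        intros i Hi. destruct i as [|[|]]; try lia; reflexivity.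
  - destruct (le_lt_dec (hlen k l m (inr (inr (a, y)))) n) as [Hh|Hh].
    + right. intros j. exists (inr (inr (a, upd y (n - hlen k l m (inr (inr (a, y)))) j))). split.
      * eapply ag_le; [|apply (proj2 (ag_M k l m a y _ (n - hlen k l m (inr (inr (a, y))))))]; [lia| apply upd_ag].
      * replace n with (hlen k l m (inr (inr (a, y))) + (n - hlen k l m (inr (inr (a, y))))) at 2 by lia.
        assert (HH := pay_M k l m a (upd y (n - hlen k l m (inr (inr (a, y)))) j) (n - hlen k l m (inr (inr (a, y))))).
        simpl hlen in HH |- *. rewrite HH. unfold upd. rewrite Nat.eqb_refl. auto.
    + destruct m as [nn|] eqn:Em.
      * left. intros j [q [Hq Hj]]. subst j.
        destruct q as [a'|[[a' x']|[a' y']]].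
        -- exfalso. pose proof (tag_same _ _ _ (inr (inr (a, y))) _ n ltac:(simpl; lia) Hq). simpl in H. lia.
        -- exfalso. pose proof (tag_same _ _ _ (inr (inr (a, y))) _ n ltac:(simpl; lia) Hq). simpl in H. lia.
        -- eapply (idx_left _ _ _ (inr (inr (a, y))) n (proj1_sig a) y); simpl; eauto; try (intros; reflexivity).
           simpl in Hh. unfold ilen in Hh. simpl in Hh. rewrite code_len in Hh. lia.
      * right. simpl in Hh. unfold ilen in Hh. simpl in Hh. assert (n = 3) by lia. subst n.
        intros j. exists (inr (inr (j, y))). split; [|reflexivity].
        intros i Hi. destruct i as [|[|[|]]]; try lia; reflexivity.
Qed.

Lemma M_good k l m (p : model_type k l m) :
  ISO (menc k l m) p (hlen k l m p) \/ KK (menc k l m) p (hlen k l m p) \/ NN (menc k l m) p (hlen k l m p).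
Proof.
  destruct p as [a|[[a x]|[a y]]].
  - left. intros y y' H1 H2. apply same_K in H1. apply same_K in H2. congruence.
  - right; left. split.
    + intros y m0 j Hm Hy [q [Hq Hj]]. subst j.
      assert (Hq' : cyl (menc k l m) (inr (inl (a, x))) (hlen k l m (inr (inl (a, x)))) q).
      { eapply cyl_trans; [|exact Hy|exact Hq]. auto. }
      destruct (same_L k l m a x q Hq') as [x' E]. subst q.
      replace m0 with (hlen k l m (inr (inl (a, x))) + (m0 - hlen k l m (inr (inl (a, x))))) by lia.
      assert (HH := pay_L k l m a x' (m0 - hlen k l m (inr (inl (a, x))))). simpl hlen in HH |- *. rewrite HH.
      destruct (x' _); simpl; lia.
    + intros y m0 Hm Hy. destruct (same_L k l m a x y Hy) as [x1 E]. subst y.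
      set (h := hlen k l m (inr (inl (a, x)))).
      assert (P : forall x0 j, menc k l m (inr (inl (a, x0))) (h + j) = bn (x0 j)) by (intros; apply pay_L).
      exists (inr (inl (a, x1))), m0. split; [lia|]. split; [apply cyl_refl|].
      split.
      * exists (inr (inl (a, updb x1 (m0 - h) false))). split.
        -- eapply ag_le; [|apply (proj2 (ag_L k l m a x1 _ (m0 - h)))]; [unfold h in *; simpl hlen in *; lia| apply updb_ag].
        -- replace m0 with (h + (m0 - h)) at 2 by lia. rewrite P. unfold updb. rewrite Nat.eqb_refl. auto.
      * exists (inr (inl (a, updb x1 (m0 - h) true))). split.
        -- eapply ag_le; [|apply (proj2 (ag_L k l m a x1 _ (m0 - h)))]; [unfold h in *; simpl hlen in *; lia| apply updb_ag].
        -- replace m0 with (h + (m0 - h)) at 2 by lia. rewrite P. unfold updb. rewrite Nat.eqb_refl. auto.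
  - right; right. intros y0 m0 Hm Hy. destruct (same_M k l m a y y0 Hy) as [y1 E]. subst y0.
    set (h := hlen k l m (inr (inr (a, y)))).
    assert (P : forall y2 j, menc k l m (inr (inr (a, y2))) (h + j) = y2 j) by (intros; apply pay_M).
    exists (inr (inr (a, y1))), m0. split; [lia|]. split; [apply cyl_refl|].
    intros j. exists (inr (inr (a, upd y1 (m0 - h) j))). split.
    + eapply ag_le; [|apply (proj2 (ag_M k l m a y1 _ (m0 - h)))]; [unfold h in *; simpl hlen in *; lia| apply upd_ag].
    + replace m0 with (h + (m0 - h)) at 2 by lia. rewrite P. unfold upd. rewrite Nat.eqb_refl. auto.
Qed.

Lemma M_open k l m (U : model_type k l m -> Prop) : model_open k l m U <-> encopen (menc k l m) U.
Proof.
  split.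
  - intros [_ [HL HM]] p Hp. destruct p as [a|[[a x]|[a y]]].
    + exists (hlen k l m (inl a)). intros q Hq. apply same_K in Hq. subst; auto.
    + destruct (HL (a, x) Hp) as [V [W [HV [HW [Va [Wx Hbox]]]]]].
      unfold cantor_open in HW. destruct (proj1 (prod_disc_iff W) HW x Wx) as [K HK].
      exists (hlen k l m (inr (inl (a, x))) + K). intros q Hq.
      destruct (same_L k l m a x q (cyl_le _ _ (hlen k l m (inr (inl (a, x))) + K) (hlen k l m (inr (inl (a, x)))) _ ltac:(lia) Hq)) as [x' E]. subst q.
      apply (Hbox a x'); auto. apply HK. apply (proj1 (ag_L k l m a x x' K)). exact Hq.
    + destruct (HM (a, y) Hp) as [V [W [HV [HW [Va [Wx Hbox]]]]]].
      unfold baire_open in HW. destruct (proj1 (prod_disc_iff W) HW y Wx) as [K HK].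
      exists (hlen k l m (inr (inr (a, y))) + K). intros q Hq.
      destruct (same_M k l m a y q (cyl_le _ _ (hlen k l m (inr (inr (a, y))) + K) (hlen k l m (inr (inr (a, y)))) _ ltac:(lia) Hq)) as [y' E]. subst q.
      apply (Hbox a y'); auto. apply HK. apply (proj1 (ag_M k l m a y y' K)). exact Hq.
  - intros H. split; [exact I|]. split.
    + intros [a x] Hp. destruct (H _ Hp) as [N HN].
      exists (fun a' => a' = a), (fun x' => ag N x' x). split; [exact I|]. split.
      * unfold cantor_open. apply prod_disc_iff. intros x'' Hx''. exists N. intros y Hy. eapply ag_trans; eauto.
      * split; [reflexivity|]. split; [apply ag_refl|]. intros a' x' E Hx'. subst a'. apply HN.
        eapply ag_le; [|apply (proj2 (ag_L k l m a x x' N) Hx')]. lia.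
    + intros [a y] Hp. destruct (H _ Hp) as [N HN].
      exists (fun a' => a' = a), (fun y' => ag N y' y). split; [exact I|]. split.
      * unfold baire_open. apply prod_disc_iff. intros x'' Hx''. exists N. intros y0 Hy. eapply ag_trans; eauto.
      * split; [reflexivity|]. split; [apply ag_refl|]. intros a' y' E Hy'. subst a'. apply HN.
        eapply ag_le; [|apply (proj2 (ag_M k l m a y y' N) Hy')]. lia.
Qed.


Definition bij (A B : Type) : Prop := exists (f : A -> B) (g : B -> A),
  (forall a, g (f a) = a) /\ (forall b, f (g b) = b).

Section Count.
Variable T : nat -> Prop.
Definition dT (n : nat) : nat := if excluded_middle_informative (T n) then 1 else 0.
Fixpoint cnt (n : nat) : nat := match n with 0 => 0 | S n => cnt n + dT n end.

Lemma cnt_mono a b : a <= b -> cnt a <= cnt b.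
Proof. induction 1; simpl; auto. lia. Qed.
Lemma cnt_S_T n : T n -> cnt (S n) = S (cnt n).
Proof. intros H. simpl. unfold dT. destruct excluded_middle_informative; [lia|contradiction]. Qed.
Lemma cnt_S_nT n : ~ T n -> cnt (S n) = cnt n.
Proof. intros H. simpl. unfold dT. destruct excluded_middle_informative; [contradiction|lia]. Qed.
Lemma cnt_inj a b : T a -> T b -> cnt a = cnt b -> a = b.
Proof.
  intros Ha Hb E. destruct (lt_eq_lt_dec a b) as [[H|H]|H]; auto.
  - pose proof (cnt_mono (S a) b H). rewrite cnt_S_T in H0 by auto. lia.
  - pose proof (cnt_mono (S b) a H). rewrite cnt_S_T in H0 by auto. lia.
Qed.
Lemma surj_below B : forall r, r < cnt B -> exists n, n < B /\ T n /\ cnt n = r.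
Proof.
  induction B; simpl; intros r Hr. lia.
  destruct (classic (T B)) as [HT|HT].
  - unfold dT in Hr. destruct excluded_middle_informative; [|contradiction].
    destruct (Nat.eq_dec r (cnt B)). subst. exists B. auto.
    destruct (IHB r ltac:(lia)) as [n0 [A1 A2]]. exists n0. split; auto.
  - unfold dT in Hr. destruct excluded_middle_informative; [contradiction|].
    destruct (IHB r ltac:(lia)) as [n0 [A1 A2]]. exists n0. split; auto.
Qed.

Lemma count_nat : exists c, bij {n | T n} (card_type c).
Proof.
  destruct (classic (exists B, forall n, T n -> n < B)) as [[B HB]|HB].
  - exists (Some (cnt B)). simpl.
    assert (Hf : forall s : {n | T n}, cnt (proj1_sig s) < cnt B).
    { intros [n Hn]. simpl. pose proof (HB n Hn). pose proof (cnt_mono (S n) B H). rewrite cnt_S_T in H0; auto. }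
    assert (Hg : forall r : {r | r < cnt B}, exists n, T n /\ cnt n = proj1_sig r).
    { intros [r Hr]. simpl. destruct (surj_below B r Hr) as [n [_ H]]; eauto. }
    exists (fun s => exist _ (cnt (proj1_sig s)) (Hf s)).
    exists (fun r => exist _ (proj1_sig (constructive_indefinite_description _ (Hg r)))
                    (proj1 (proj2_sig (constructive_indefinite_description _ (Hg r))))).
    split.
    + intros [n Hn]. apply eq_sig_hprop; [intros; apply proof_irrelevance|]. simpl.
      destruct (constructive_indefinite_description _ _) as [n' [H1 H2]]. simpl. apply cnt_inj; auto.
    + intros [r Hr]. apply eq_sig_hprop; [intros; apply proof_irrelevance|]. simpl.
      destruct (constructive_indefinite_description _ _) as [n' [H1 H2]]. simpl. auto.
  - exists None. simpl.
    assert (Hun : forall r, exists B, r < cnt B).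
    { induction r.
      - assert (exists n, T n) as [n Hn].
        { apply NNPP. intros H. apply HB. exists 0. intros n Hn. exfalso; apply H; eauto. }
        exists (S n). rewrite cnt_S_T; auto. lia.
      - destruct IHr as [B HBr].
        assert (exists n, B <= n /\ T n) as [n [Hn1 Hn2]].
        { apply NNPP. intros H. apply HB. exists B. intros n Hn. destruct (le_lt_dec B n); auto.
          exfalso; apply H; eauto. }
        exists (S n). rewrite cnt_S_T; auto. pose proof (cnt_mono B n Hn1). lia. }
    assert (Hg : forall r, exists n, T n /\ cnt n = r).
    { intros r. destruct (Hun r) as [B HB']. destruct (surj_below B r HB') as [n [_ H]]; eauto. }
    exists (fun s => cnt (proj1_sig s)).
    exists (fun r => exist _ (proj1_sig (constructive_indefinite_description _ (Hg r)))
                    (proj1 (proj2_sig (constructive_indefinite_description _ (Hg r))))).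
    split.
    + intros [n Hn]. apply eq_sig_hprop; [intros; apply proof_irrelevance|]. simpl.
      destruct (constructive_indefinite_description _ _) as [n' [H1 H2]]. simpl. apply cnt_inj; auto.
    + intros r. simpl. destruct (constructive_indefinite_description _ _) as [n' [H1 H2]]. simpl. auto.
Qed.
End Count.

Lemma count_gen {A : Type} (iota : A -> nat) (Hi : forall a b, iota a = iota b -> a = b) (S : A -> Prop) :
  exists c, bij {a | S a} (card_type c).
Proof.
  set (T := fun n => exists a, S a /\ iota a = n).
  destruct (count_nat T) as [c [f [g [H1 H2]]]]. exists c.
  assert (Hh : forall t : {n | T n}, exists a, S a /\ iota a = proj1_sig t).
  { intros [n [a Ha]]. simpl. eauto. }
  set (h := fun t : {n | T n} => proj1_sig (constructive_indefinite_description _ (Hh t))).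
  assert (hS : forall t, S (h t)) by (intros t; unfold h; destruct (constructive_indefinite_description _ _) as [a [Ha1 Ha2]]; auto).
  assert (hI : forall t, iota (h t) = proj1_sig t) by (intros t; unfold h; destruct (constructive_indefinite_description _ _) as [a [Ha1 Ha2]]; auto).
  assert (Te : forall s : {a | S a}, T (iota (proj1_sig s))) by (intros [a Ha]; exists a; auto).
  exists (fun s => f (exist _ (iota (proj1_sig s)) (Te s))).
  exists (fun b => exist _ (h (g b)) (hS (g b))).
  split.
  - intros [a Ha]. apply eq_sig_hprop; [intros; apply proof_irrelevance|]. simpl.
    apply Hi. rewrite hI, H1. reflexivity.
  - intros b. transitivity (f (g b)); [|apply H2]. f_equal. apply eq_sig_hprop; [intros; apply proof_irrelevance|]. simpl.
    apply hI.
Qed.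

Fixpoint lcode (s : list nat) : nat := match s with [] => 0 | a :: s => S (Cantor.to_nat (a, lcode s)) end.
Lemma lcode_inj s t : lcode s = lcode t -> s = t.
Proof.
  revert t; induction s as [|a s IH]; intros [|b t]; intros H; try discriminate; auto.
  assert (E : Cantor.to_nat (a, lcode s) = Cantor.to_nat (b, lcode t)) by (exact (f_equal pred H)).
  apply Cantor.to_nat_inj in E. injection E as H1 H2. subst. f_equal. auto.
Qed.


Lemma cont_transfer {X Y : Type} (eX : X -> nat -> nat) (eY : Y -> nat -> nat) (f : X -> Y) :
  (forall x N, exists N', forall y, cyl eX x N' y -> ag N (eY (f y)) (eY (f x))) ->
  forall V, encopen eY V -> encopen eX (fun x => V (f x)).
Proof.
  intros Hc V HV x Hx. destruct (HV (f x) Hx) as [N HN]. destruct (Hc x N) as [N' HN'].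
  exists N'. intros y Hy. apply HN. apply HN'. auto.
Qed.

Lemma sig_eq_val {A : Type} (S : A -> Prop) (s : {a | S a}) (v : A) (pf : S v) :
  proj1_sig s = v -> exist S v pf = s.
Proof. intros H. apply eq_sig_hprop; [intros; apply proof_irrelevance|]. simpl; auto. Qed.

Section Classify.
Variable X : Type.
Variable op : opens X.
Variable enc : X -> nat -> nat.
Hypothesis Hop : forall U, op U <-> encopen enc U.
Hypothesis Hinj : INJ enc.
Hypothesis HE3 : E3 enc.
Hypothesis HBR : BR enc.
Definition good (x : X) (n : nat) := ISO enc x n \/ KK enc x n \/ NN enc x n.
Hypothesis Hgood : forall x, exists n, good x n.

Lemma good_her x n y : good x n -> cyl enc x n y -> good y n.
Proof.
  intros [H|[H|H]] Hy; [left|right;left|right;right].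
  eapply ISO_her; eauto. eapply KK_her; eauto. eapply NN_her; eauto.
Qed.

Lemma mg_ex x : exists n, good x n /\ forall p, p < n -> ~ good x p.
Proof. destruct (Hgood x) as [n Hn]. apply (ex_min _ n Hn). Qed.
Definition mg (x : X) : nat := proj1_sig (constructive_indefinite_description _ (mg_ex x)).
Lemma mg_good x : good x (mg x).
Proof. unfold mg. destruct (constructive_indefinite_description _ _) as [n [H1 H2]]; auto. Qed.
Lemma mg_min x p : p < mg x -> ~ good x p.
Proof. unfold mg. destruct (constructive_indefinite_description _ _) as [n [H1 H2]]; auto. Qed.

Lemma mg_eq x y : cyl enc x (mg x) y -> mg y = mg x.
Proof.
  intros H. destruct (lt_eq_lt_dec (mg y) (mg x)) as [[L|L]|L]; auto.
  - exfalso. apply (mg_min x (mg y) L). apply (good_her y); [apply mg_good|].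
    apply cyl_sym. eapply cyl_le; [|exact H]. lia.
  - exfalso. apply (mg_min y (mg x) L). eapply good_her; [apply mg_good|exact H].
Qed.

Definition key (x : X) : list nat := map (enc x) (seq 0 (mg x)).
Lemma key_eq x y : cyl enc x (mg x) y -> key y = key x.
Proof.
  intros H. unfold key. rewrite (mg_eq x y H). apply map_ext_in. intros i Hi. apply in_seq in Hi. apply H. lia.
Qed.
Lemma key_cyl x y : key x = key y -> cyl enc x (mg x) y.
Proof.
  intros H. assert (E : mg x = mg y).
  { apply (f_equal (@length nat)) in H. unfold key in H. rewrite !length_map, !length_seq in H. auto. }
  intros i Hi. assert (nth i (key x) 0 = nth i (key y) 0) by congruence.
  unfold key in H0. rewrite !(nth_indep _ 0 (enc x 0)) in H0 by (rewrite length_map, length_seq; lia).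
  rewrite (map_nth (enc x) (seq 0 (mg x)) 0 i) in H0.
  rewrite (nth_indep (map (enc y) (seq 0 (mg y))) (enc x 0) (enc y 0)) in H0 by (rewrite length_map, length_seq; lia).
  rewrite (map_nth (enc y) (seq 0 (mg y)) 0 i) in H0.
  rewrite !seq_nth in H0 by lia. simpl in H0. auto.
Qed.

Definition typ (x : X) : nat :=
  if excluded_middle_informative (ISO enc x (mg x)) then 0 else
  if excluded_middle_informative (KK enc x (mg x)) then 1 else 2.
Lemma typ_eq x y : cyl enc x (mg x) y -> typ y = typ x.
Proof.
  intros H. assert (E := mg_eq x y H). unfold typ. rewrite E.
  assert (Hs := cyl_sym _ _ _ _ H).
  destruct (excluded_middle_informative (ISO enc x (mg x))) as [A|A];
  destruct (excluded_middle_informative (ISO enc y (mg x))) as [B|B].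
  - auto.
  - exfalso. apply B. eapply ISO_her; eauto.
  - exfalso. apply A. eapply ISO_her; eauto.
  - destruct (excluded_middle_informative (KK enc x (mg x))) as [C|C];
    destruct (excluded_middle_informative (KK enc y (mg x))) as [D|D]; auto.
    + exfalso. apply D. eapply KK_her; eauto.
    + exfalso. apply C. eapply KK_her; eauto.
Qed.
Lemma typ0 x : typ x = 0 -> ISO enc x (mg x).
Proof. unfold typ. destruct excluded_middle_informative; auto. destruct excluded_middle_informative; discriminate. Qed.
Lemma typ1 x : typ x = 1 -> KK enc x (mg x).
Proof. unfold typ. destruct excluded_middle_informative. discriminate. destruct excluded_middle_informative; auto; discriminate. Qed.
Lemma typ2 x : typ x = 2 -> NN enc x (mg x).
Proof.
  unfold typ. destruct excluded_middle_informative. discriminate. destruct excluded_middle_informative. discriminate.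
  intros _. destruct (mg_good x) as [A|[A|A]]; tauto.
Qed.
Lemma typ_2 x : typ x <> 0 -> typ x <> 1 -> typ x = 2.
Proof. unfold typ. destruct excluded_middle_informative. tauto. destruct excluded_middle_informative; tauto. Qed.

Definition SI (s : list nat) := exists x, key x = s /\ typ x = 0.
Definition SK (s : list nat) := exists x, key x = s /\ typ x = 1.
Definition SN (s : list nat) := exists x, key x = s /\ typ x = 2.

Definition repI (s : {s | SI s}) : X := proj1_sig (constructive_indefinite_description _ (proj2_sig s)).
Lemma repI_spec s : key (repI s) = proj1_sig s /\ typ (repI s) = 0.
Proof. unfold repI. destruct (constructive_indefinite_description _ _) as [x Hx]; auto. Qed.
Definition repK (s : {s | SK s}) : X := proj1_sig (constructive_indefinite_description _ (proj2_sig s)).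
Lemma repK_spec s : key (repK s) = proj1_sig s /\ typ (repK s) = 1.
Proof. unfold repK. destruct (constructive_indefinite_description _ _) as [x Hx]; auto. Qed.
Definition repN (s : {s | SN s}) : X := proj1_sig (constructive_indefinite_description _ (proj2_sig s)).
Lemma repN_spec s : key (repN s) = proj1_sig s /\ typ (repN s) = 2.
Proof. unfold repN. destruct (constructive_indefinite_description _ _) as [x Hx]; auto. Qed.

Definition schspec {D : Type} (x0 : X) (n0 : nat) (FG : (X -> nat -> D) * ((nat -> D) -> X)) : Prop :=
  let F := fst FG in let G := snd FG in
  (forall z, cyl enc x0 n0 (G z)) /\ (forall z k, F (G z) k = z k) /\
  (forall y, cyl enc x0 n0 y -> G (F y) = y) /\
  (forall z N z', ag N z' z -> ag N (enc (G z')) (enc (G z))) /\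
  (forall y, cyl enc x0 n0 y -> forall k, exists N, forall y', cyl enc y N y' -> ag k (F y') (F y)).

Lemma SK_ex s : exists FG : (X -> nat -> bool) * ((nat -> bool) -> X), schspec (repK s) (mg (repK s)) FG.
Proof.
  destruct (TC_thm X enc HE3 Hinj (repK s) (mg (repK s))) as [F [G H]].
  apply typ1. apply repK_spec. exists (F, G). exact H.
Qed.
Lemma SN_ex s : exists FG : (X -> nat -> nat) * ((nat -> nat) -> X), schspec (repN s) (mg (repN s)) FG.
Proof.
  destruct (TB_thm X enc HE3 Hinj HBR (repN s) (mg (repN s))) as [F [G H]].
  apply typ2. apply repN_spec. exists (F, G). exact H.
Qed.
Definition SKf s := proj1_sig (constructive_indefinite_description _ (SK_ex s)).
Definition SNf s := proj1_sig (constructive_indefinite_description _ (SN_ex s)).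
Lemma SKf_spec s : schspec (repK s) (mg (repK s)) (SKf s).
Proof. unfold SKf. destruct (constructive_indefinite_description _ _); auto. Qed.
Lemma SNf_spec s : schspec (repN s) (mg (repN s)) (SNf s).
Proof. unfold SNf. destruct (constructive_indefinite_description _ _); auto. Qed.

Lemma in_rep_node (r x : X) : key r = key x -> cyl enc r (mg r) x.
Proof. apply key_cyl. Qed.

Section Maps.
Variables cI cK cN : option nat.
Variable fI : {s | SI s} -> card_type cI.
Variable gI : card_type cI -> {s | SI s}.
Hypothesis fgI : forall a, gI (fI a) = a.
Hypothesis gfI : forall b, fI (gI b) = b.
Variable fK : {s | SK s} -> card_type cK.
Variable gK : card_type cK -> {s | SK s}.
Hypothesis fgK : forall a, gK (fK a) = a.
Hypothesis gfK : forall b, fK (gK b) = b.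
Variable fN : {s | SN s} -> card_type cN.
Variable gN : card_type cN -> {s | SN s}.
Hypothesis fgN : forall a, gN (fN a) = a.
Hypothesis gfN : forall b, fN (gN b) = b.

Definition Phi (x : X) : model_type cI cK cN :=
  match Nat.eq_dec (typ x) 0 with
  | left h => inl (fI (exist SI (key x) (ex_intro _ x (conj eq_refl h))))
  | right h1 => match Nat.eq_dec (typ x) 1 with
     | left h => let s := exist SK (key x) (ex_intro _ x (conj eq_refl h)) in
                 inr (inl (fK s, fst (SKf s) x))
     | right h2 => let s := exist SN (key x) (ex_intro _ x (conj eq_refl (typ_2 x h1 h2))) in
                 inr (inr (fN s, fst (SNf s) x))
     end
  end.

Definition Psi (p : model_type cI cK cN) : X :=
  match p with
  | inl a => repI (gI a)
  | inr (inl (a, z)) => snd (SKf (gK a)) z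
  | inr (inr (a, z)) => snd (SNf (gN a)) z
  end.

Lemma Phi_I x (s : {s | SI s}) : proj1_sig s = key x -> typ x = 0 -> Phi x = inl (fI s).
Proof.
  intros E T. unfold Phi. destruct (Nat.eq_dec (typ x) 0) as [h|h]; [|contradiction].
  f_equal. f_equal. apply sig_eq_val. auto.
Qed.
Lemma Phi_K x (s : {s | SK s}) : proj1_sig s = key x -> typ x = 1 -> Phi x = inr (inl (fK s, fst (SKf s) x)).
Proof.
  intros E T. unfold Phi. destruct (Nat.eq_dec (typ x) 0) as [h|h]; [congruence|].
  destruct (Nat.eq_dec (typ x) 1) as [h'|h']; [|contradiction].
  cbv zeta. rewrite (sig_eq_val SK s (key x) _ E). reflexivity.
Qed.
Lemma Phi_N x (s : {s | SN s}) : proj1_sig s = key x -> typ x = 2 -> Phi x = inr (inr (fN s, fst (SNf s) x)).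
Proof.
  intros E T. unfold Phi. destruct (Nat.eq_dec (typ x) 0) as [h|h]; [congruence|].
  destruct (Nat.eq_dec (typ x) 1) as [h'|h']; [congruence|].
  cbv zeta. rewrite (sig_eq_val SN s (key x) _ E). reflexivity.
Qed.

Lemma typ_cases x : typ x = 0 \/ typ x = 1 \/ typ x = 2.
Proof. unfold typ. repeat destruct excluded_middle_informative; auto. Qed.

Lemma PsiPhi x : Psi (Phi x) = x.
Proof.
  destruct (typ_cases x) as [T|[T|T]].
  - set (s := exist SI (key x) (ex_intro _ x (conj eq_refl T))).
    rewrite (Phi_I x s eq_refl T). simpl. rewrite fgI.
    destruct (repI_spec s) as [A B]. apply (typ0 _ B).
    + apply cyl_refl.
    + apply in_rep_node. rewrite A. reflexivity.
  - set (s := exist SK (key x) (ex_intro _ x (conj eq_refl T))).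
    rewrite (Phi_K x s eq_refl T). simpl. rewrite fgK.
    destruct (repK_spec s) as [A B]. destruct (SKf_spec s) as [_ [_ [H _]]]. apply H.
    apply in_rep_node. rewrite A. reflexivity.
  - set (s := exist SN (key x) (ex_intro _ x (conj eq_refl T))).
    rewrite (Phi_N x s eq_refl T). simpl. rewrite fgN.
    destruct (repN_spec s) as [A B]. destruct (SNf_spec s) as [_ [_ [H _]]]. apply H.
    apply in_rep_node. rewrite A. reflexivity.
Qed.

Lemma PhiPsi p : Phi (Psi p) = p.
Proof.
  destruct p as [a|[[a z]|[a z]]]; simpl.
  - destruct (repI_spec (gI a)) as [A B]. rewrite (Phi_I _ (gI a) (eq_sym A) B). rewrite gfI. auto.
  - destruct (repK_spec (gK a)) as [A B]. destruct (SKf_spec (gK a)) as [H1 [H2 _]].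
    set (y := snd (SKf (gK a)) z).
    assert (Hy : cyl enc (repK (gK a)) (mg (repK (gK a))) y) by apply H1.
    rewrite (Phi_K y (gK a)).
    + rewrite gfK. f_equal; f_equal; f_equal. apply functional_extensionality. intros; apply H2.
    + rewrite (key_eq _ _ Hy). auto.
    + rewrite (typ_eq _ _ Hy). auto.
  - destruct (repN_spec (gN a)) as [A B]. destruct (SNf_spec (gN a)) as [H1 [H2 _]].
    set (y := snd (SNf (gN a)) z).
    assert (Hy : cyl enc (repN (gN a)) (mg (repN (gN a))) y) by apply H1.
    rewrite (Phi_N y (gN a)).
    + rewrite gfN. f_equal; f_equal; f_equal. apply functional_extensionality. intros; apply H2.
    + rewrite (key_eq _ _ Hy). auto.
    + rewrite (typ_eq _ _ Hy). auto.
Qed.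

Lemma Phi_cont x N : exists N', forall y, cyl enc x N' y -> ag N (menc cI cK cN (Phi y)) (menc cI cK cN (Phi x)).
Proof.
  destruct (typ_cases x) as [T|[T|T]].
  - set (s := exist SI (key x) (ex_intro _ x (conj eq_refl T))).
    exists (mg x). intros y Hy. rewrite (Phi_I x s eq_refl T).
    rewrite (Phi_I y s). apply ag_refl. simpl. symmetry; apply key_eq; auto. rewrite (typ_eq _ _ Hy); auto.
  - set (s := exist SK (key x) (ex_intro _ x (conj eq_refl T))).
    destruct (repK_spec s) as [A B]. destruct (SKf_spec s) as [_ [_ [_ [_ H5]]]].
    destruct (H5 x (in_rep_node _ _ (eq_trans A eq_refl)) N) as [NF HNF].
    exists (mg x + NF). intros y Hy.
    assert (Hy1 : cyl enc x (mg x) y) by (eapply cyl_le; [|exact Hy]; lia).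
    rewrite (Phi_K x s eq_refl T). rewrite (Phi_K y s).
    + eapply ag_le; [|apply (proj2 (ag_L cI cK cN (fK s) _ _ N))]. lia. apply HNF. eapply cyl_le; [|exact Hy]; lia.
    + simpl. symmetry; apply key_eq; auto.
    + rewrite (typ_eq _ _ Hy1); auto.
  - set (s := exist SN (key x) (ex_intro _ x (conj eq_refl T))).
    destruct (repN_spec s) as [A B]. destruct (SNf_spec s) as [_ [_ [_ [_ H5]]]].
    destruct (H5 x (in_rep_node _ _ (eq_trans A eq_refl)) N) as [NF HNF].
    exists (mg x + NF). intros y Hy.
    assert (Hy1 : cyl enc x (mg x) y) by (eapply cyl_le; [|exact Hy]; lia).
    rewrite (Phi_N x s eq_refl T). rewrite (Phi_N y s).
    + eapply ag_le; [|apply (proj2 (ag_M cI cK cN (fN s) _ _ N))]. lia. apply HNF. eapply cyl_le; [|exact Hy]; lia.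
    + simpl. symmetry; apply key_eq; auto.
    + rewrite (typ_eq _ _ Hy1); auto.
Qed.

Lemma Psi_cont p N : exists N', forall q, cyl (menc cI cK cN) p N' q -> ag N (enc (Psi q)) (enc (Psi p)).
Proof.
  destruct p as [a|[[a z]|[a z]]].
  - exists (hlen cI cK cN (inl a)). intros q Hq. apply same_K in Hq. subst. apply ag_refl.
  - exists (hlen cI cK cN (inr (inl (a, z))) + N). intros q Hq.
    destruct (same_L _ _ _ a z q (cyl_le _ _ (hlen cI cK cN (inr (inl (a, z))) + N) (hlen cI cK cN (inr (inl (a, z)))) _ ltac:(lia) Hq)) as [z' E].
    subst q. simpl. destruct (SKf_spec (gK a)) as [_ [_ [_ [H4 _]]]]. apply H4.
    apply (proj1 (ag_L cI cK cN a z z' N)). exact Hq.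
  - exists (hlen cI cK cN (inr (inr (a, z))) + N). intros q Hq.
    destruct (same_M _ _ _ a z q (cyl_le _ _ (hlen cI cK cN (inr (inr (a, z))) + N) (hlen cI cK cN (inr (inr (a, z)))) _ ltac:(lia) Hq)) as [z' E].
    subst q. simpl. destruct (SNf_spec (gN a)) as [_ [_ [_ [H4 _]]]]. apply H4.
    apply (proj1 (ag_M cI cK cN a z z' N)). exact Hq.
Qed.

Lemma homeo_model : homeomorphic op (model_open cI cK cN).
Proof.
  exists Phi, Psi. split; [apply PsiPhi|]. split; [apply PhiPsi|]. split.
  - intros V HV. apply Hop. apply M_open in HV. apply (cont_transfer enc (menc cI cK cN) Phi); auto.
    intros; apply Phi_cont.
  - intros U HU. apply M_open. apply Hop in HU. apply (cont_transfer (menc cI cK cN) enc Psi); auto.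
    intros; apply Psi_cont.
Qed.
End Maps.

Theorem classify : in_C op.
Proof.
  destruct (count_gen lcode lcode_inj SI) as [cI [fI [gI [H1 H2]]]].
  destruct (count_gen lcode lcode_inj SK) as [cK [fK [gK [H3 H4]]]].
  destruct (count_gen lcode lcode_inj SN) as [cN [fN [gN [H5 H6]]]].
  exists cI, cK, cN. eapply homeo_model; eauto.
Qed.
End Classify.


Definition pos (c j : nat) : nat := Cantor.to_nat (c, j).
Lemma pos_of c j : Cantor.of_nat (pos c j) = (c, j).
Proof. apply Cantor.cancel_of_to. Qed.
Lemma pos_ge c j : c + j <= pos c j.
Proof. unfold pos. pose proof (Cantor.to_nat_non_decreasing c j). lia. Qed.
Lemma pos_S c j : pos c j < pos c (S j).
Proof.
  unfold pos. pose proof (Cantor.to_nat_spec c j). pose proof (Cantor.to_nat_spec c (S j)). nia.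
Qed.
Lemma pos_lt c j j' : j < j' -> pos c j < pos c j'.
Proof. induction 1. apply pos_S. pose proof (pos_S c m). lia. Qed.
Lemma pos_lt_iff c j j' : pos c j < pos c j' <-> j < j'.
Proof.
  split; [|apply pos_lt]. intros H. destruct (lt_eq_lt_dec j j') as [[A|A]|A]; auto.
  subst; lia. pose proof (pos_lt c _ _ A). lia.
Qed.
Lemma pos_le_iff c j j' : pos c j <= pos c j' <-> j <= j'.
Proof.
  split; intros H.
  - destruct (le_lt_dec j j'); auto. pose proof (pos_lt c _ _ l). lia.
  - destruct (Nat.eq_dec j j'). subst; lia. pose proof (pos_lt c j j' ltac:(lia)). lia.
Qed.
Lemma pos_fo p : pos (fst (Cantor.of_nat p)) (snd (Cantor.of_nat p)) = p.
Proof. unfold pos. rewrite <- surjective_pairing. apply Cantor.cancel_to_of. Qed.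

Section Prod.
Variable I : Type.
Variable f : I -> nat.
Hypothesis Hf : forall i j, f i = f j -> i = j.
Variables kk ll mm : I -> option nat.
Definition MM (i : I) : Type := model_type (kk i) (ll i) (mm i).
Definition me (i : I) : MM i -> nat -> nat := menc (kk i) (ll i) (mm i).
Definition PP : Type := forall i, MM i.

Definition inv (c : nat) : option I :=
  match excluded_middle_informative (exists i, f i = c) with
  | left h => Some (proj1_sig (constructive_indefinite_description _ h))
  | right _ => None end.
Lemma inv_f i : inv (f i) = Some i.
Proof.
  unfold inv. destruct excluded_middle_informative as [h|h].
  - f_equal. apply Hf. exact (proj2_sig (constructive_indefinite_description _ h)).
  - exfalso; apply h; eauto.
Qed.
Lemma inv_Some c i : inv c = Some i -> f i = c.
Proof.
  unfold inv. destruct excluded_middle_informative as [h|h]; [|discriminate].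
  intros E. injection E as E. subst. exact (proj2_sig (constructive_indefinite_description _ h)).
Qed.

Definition penc (x : PP) (p : nat) : nat :=
  match inv (fst (Cantor.of_nat p)) with
  | Some i => me i (x i) (snd (Cantor.of_nat p))
  | None => 0 end.
Lemma penc_pos x i j : penc x (pos (f i) j) = me i (x i) j.
Proof. unfold penc. rewrite pos_of. simpl. rewrite inv_f. auto. Qed.

Definition updP (x : PP) (i : I) (v : MM i) : PP := fun i' =>
  match excluded_middle_informative (i = i') with
  | left e => eq_rect i MM v i' e
  | right _ => x i' end.
Lemma updP_same x i v : updP x i v i = v.
Proof.
  unfold updP. destruct excluded_middle_informative as [e|e]; [|tauto].
  rewrite (proof_irrelevance _ e eq_refl). reflexivity.
Qed.
Lemma updP_other x i v i' : i <> i' -> updP x i v i' = x i'.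
Proof. unfold updP. destruct excluded_middle_informative; tauto. Qed.

Lemma cylP_coord x N y i j : cyl penc x N y -> pos (f i) j < N -> me i (y i) j = me i (x i) j.
Proof. intros H Hj. rewrite <- !penc_pos. apply H; auto. Qed.

Lemma upd_cyl x n i w : (forall j, pos (f i) j < n -> me i w j = me i (x i) j) -> cyl penc x n (updP x i w).
Proof.
  intros H p Hp. unfold penc. destruct (inv (fst (Cantor.of_nat p))) as [i'|] eqn:E; auto.
  destruct (excluded_middle_informative (i = i')) as [e|e].
  - subst i'. rewrite updP_same. apply H. apply inv_Some in E. rewrite E, pos_fo. auto.
  - rewrite updP_other; auto.
Qed.

Lemma child_iff x n j :
  has_child penc x n j <->
  match inv (fst (Cantor.of_nat n)) with
  | Some i => has_child (me i) (x i) (snd (Cantor.of_nat n)) j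
  | None => j = 0 end.
Proof.
  destruct (inv (fst (Cantor.of_nat n))) as [i|] eqn:E.
  - assert (En : n = pos (f i) (snd (Cantor.of_nat n))) by (apply inv_Some in E; rewrite E; symmetry; apply pos_fo).
    split.
    + intros [y [Hy Hj]]. exists (y i). split.
      * intros j' Hj'. apply (cylP_coord x n y i j' Hy). rewrite En. apply pos_lt; auto.
      * rewrite <- Hj. rewrite En at 2. rewrite penc_pos. auto.
    + intros [w [Hw Hj]]. exists (updP x i w). split.
      * apply upd_cyl. intros j' Hj'. apply Hw. rewrite En in Hj'. apply pos_lt_iff in Hj'. auto.
      * rewrite En. rewrite penc_pos, updP_same. auto.
  - split.
    + intros [y [Hy Hj]]. unfold penc in Hj. rewrite E in Hj. auto.
    + intros H. exists x. split. apply cyl_refl. unfold penc. rewrite E. auto.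
Qed.

Lemma P_BR : BR penc.
Proof.
  intros x n. destruct (inv (fst (Cantor.of_nat n))) as [i|] eqn:E.
  - destruct (M_BR (kk i) (ll i) (mm i) (x i) (snd (Cantor.of_nat n))) as [A|A].
    + left. intros j Hj. apply child_iff in Hj. rewrite E in Hj. apply A. exact Hj.
    + right. intros j. apply child_iff. rewrite E. apply A.
  - left. intros j Hj. apply child_iff in Hj. rewrite E in Hj. lia.
Qed.

Lemma realize x n i w nw : (forall j, pos (f i) j < n -> me i w j = me i (x i) j) -> n <= pos (f i) nw ->
  cyl penc x n (updP x i w) /\ forall j, has_child penc (updP x i w) (pos (f i) nw) j <-> has_child (me i) w nw j.
Proof.
  intros H1 H2. split. apply upd_cyl; auto.
  intros j. rewrite child_iff. rewrite pos_of. simpl. rewrite inv_f. rewrite updP_same. tauto.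
Qed.

Lemma P_inj : INJ penc.
Proof.
  intros x y H. apply functional_extensionality_dep. intros i.
  apply (M_inj (kk i) (ll i) (mm i)). intros j. change (me i (x i) j = me i (y i) j). rewrite <- !penc_pos. apply H.
Qed.

Lemma P_E3 : E3 penc.
Proof.
  intros g Hg.
  assert (Hex : forall i, exists v : MM i, forall j, me i v j = g (pos (f i) j)).
  { intros i. apply (M_E3 (kk i) (ll i) (mm i)). intros n. destruct (Hg (pos (f i) n)) as [x Hx].
    exists (x i). intros j Hj. change (me i (x i) j = g (pos (f i) j)). rewrite <- penc_pos. apply Hx. apply pos_lt; auto. }
  exists (fun i => proj1_sig (constructive_indefinite_description _ (Hex i))).
  intros p. unfold penc at 1. destruct (inv (fst (Cantor.of_nat p))) as [i|] eqn:E.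
  - destruct (constructive_indefinite_description _ (Hex i)) as [v Hv]. simpl. rewrite Hv.
    apply inv_Some in E. rewrite E, pos_fo. auto.
  - destruct (Hg (S p)) as [x Hx]. rewrite <- (Hx p) by lia. unfold penc. rewrite E. auto.
Qed.

Definition Pop : opens PP := prod_open MM (fun i => model_open (kk i) (ll i) (mm i)).

Lemma list_bound (F : list I) (h : I -> nat) : exists N, forall i, In i F -> h i <= N.
Proof.
  induction F as [|a F IH]. exists 0; simpl; tauto.
  destruct IH as [N HN]. exists (max N (h a)). intros i [E|Hi]. subst; lia. pose proof (HN i Hi); lia.
Qed.

Lemma P_open U : Pop U <-> encopen penc U.
Proof.
  split.
  - intros H x Hx. destruct (H x Hx) as [F [V [HV [Vx Hbox]]]].
    assert (HN : forall i, In i F -> exists Ni, forall v, cyl (me i) (x i) Ni v -> V i v).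
    { intros i Hi. apply (proj1 (M_open (kk i) (ll i) (mm i) (V i)) (HV i Hi)). auto. }
    assert (HN' : forall i, exists Ni, In i F -> forall v, cyl (me i) (x i) Ni v -> V i v).
    { intros i. destruct (classic (In i F)). destruct (HN i H0) as [Ni HNi]. eauto. exists 0; tauto. }
    set (h := fun i => proj1_sig (constructive_indefinite_description _ (HN' i))).
    destruct (list_bound F (fun i => pos (f i) (h i))) as [N HB].
    exists N. intros y Hy. apply Hbox. intros i Hi.
    unfold h in HB. specialize (HB i Hi). simpl in HB.
    destruct (constructive_indefinite_description _ (HN' i)) as [Ni HNi]. simpl in HB.
    apply HNi; auto. intros j Hj. apply (cylP_coord x N y i j Hy). pose proof (pos_lt (f i) j Ni Hj). lia.
  - intros H x Hx. destruct (H x Hx) as [N HN].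
    exists (flat_map (fun c => match inv c with Some i => [i] | None => [] end) (seq 0 N)).
    exists (fun i v => forall j, j < N -> me i v j = me i (x i) j).
    split; [|split].
    + intros i _. apply M_open. intros v Hv. exists N. intros w Hw j Hj. unfold me in *. rewrite Hw by auto. auto.
    + intros i j Hj. auto.
    + intros y Hy. apply HN. intros p Hp. unfold penc. destruct (inv (fst (Cantor.of_nat p))) as [i|] eqn:E; auto.
      apply Hy.
      * apply in_flat_map. exists (fst (Cantor.of_nat p)). split. apply in_seq.
        pose proof (pos_ge (fst (Cantor.of_nat p)) (snd (Cantor.of_nat p))). rewrite pos_fo in H0. lia.
        rewrite E. simpl; auto.
      * pose proof (pos_ge (fst (Cantor.of_nat p)) (snd (Cantor.of_nat p))). rewrite pos_fo in H0. lia.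
Qed.

Definition compact (i : I) : Prop := forall (v : MM i) n j, has_child (me i) v n j -> j <= 1.
Definition trivial (i : I) : Prop := forall v v' : MM i, v = v'.

Lemma F1 i : ~ compact i -> exists w nw, forall j, has_child (me i) w nw j.
Proof.
  intros H. apply NNPP. intros H'. apply H. intros v n j Hj.
  destruct (M_BR (kk i) (ll i) (mm i) v n) as [A|A]. apply A; auto.
  exfalso. apply H'. exists v, n. exact A.
Qed.

Lemma F2 i : ~ trivial i -> compact i -> exists w nw, has_child (me i) w nw 0 /\ has_child (me i) w nw 1.
Proof.
  intros Ht Hc. apply NNPP. intros H. apply Ht. intros v v'. apply NNPP. intros Hne.
  assert (exists t, me i v t <> me i v' t) as [t Ht'].
  { apply NNPP. intros H2. apply Hne. apply (M_inj (kk i) (ll i) (mm i)). intros t. apply NNPP. intros H3. apply H2. eauto. }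
  destruct (ex_min (fun t => me i v t <> me i v' t) t Ht') as [t0 [A B]].
  assert (Hc1 : has_child (me i) v t0 (me i v t0)) by (exists v; split; [apply cyl_refl|auto]).
  assert (Hc2 : has_child (me i) v t0 (me i v' t0)).
  { exists v'. split; auto. intros q Hq. apply NNPP. intros E. apply (B q Hq). auto. }
  pose proof (Hc _ _ _ Hc1). pose proof (Hc _ _ _ Hc2).
  apply H. exists v, t0.
  destruct (me i v t0) as [|[|]] eqn:E1; destruct (me i v' t0) as [|[|]] eqn:E2; try lia; split; auto.
Qed.

Lemma ISO_fb {X : Type} (enc : X -> nat -> nat) : BR enc -> forall x n y m j,
  ISO enc x n -> n <= m -> cyl enc x n y -> has_child enc y m j -> j <= 1.
Proof.
  intros HBR x n y m j Hiso Hm Hy [q [Hq Hj]].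
  assert (Hq' : cyl enc x n q) by (eapply cyl_trans; eauto).
  assert (q = y) by (apply Hiso; auto). subst q.
  destruct (HBR y m) as [A|A].
  - apply A. exists y; split; [apply cyl_refl|auto].
  - exfalso. destruct (A 0) as [q0 [H0 E0]]. destruct (A 1) as [q1 [H1 E1]].
    assert (q0 = y) by (apply Hiso; auto; eapply cyl_trans; eauto).
    assert (q1 = y) by (apply Hiso; auto; eapply cyl_trans; eauto). subst. lia.
Qed.

Lemma core (B0 : nat) (Hnc : forall i, ~ compact i -> f i < B0)
  (Halt : (forall B', exists i, B' <= f i /\ ~ trivial i) \/ (forall i, ~ trivial i -> f i < B0)) :
  forall x : PP, exists n, ISO penc x n \/ KK penc x n \/ NN penc x n.
Proof.
  intros x.
  set (Fs := flat_map (fun c => match inv c with Some i => [i] | None => [] end) (seq 0 B0)).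
  assert (InFs : forall i, f i < B0 -> In i Fs).
  { intros i Hi. apply in_flat_map. exists (f i). split. apply in_seq; lia. rewrite inv_f. simpl; auto. }
  set (h := fun i => hlen (kk i) (ll i) (mm i) (x i)).
  assert (goodi : forall i, ISO (me i) (x i) (h i) \/ KK (me i) (x i) (h i) \/ NN (me i) (x i) (h i))
    by (intros i; apply M_good).
  destruct (list_bound Fs (fun i => pos (f i) (h i))) as [N HN].
  assert (Nd : forall y, cyl penc x N y -> forall i, In i Fs -> cyl (me i) (x i) (h i) (y i)).
  { intros y Hy i Hi j Hj. apply (cylP_coord x N y i j Hy). pose proof (HN i Hi). simpl in H.
    pose proof (pos_lt (f i) j (h i) Hj). lia. }
  assert (Rz : forall y m i w nw, m <= nw -> (forall j, j < m -> me i w j = me i (y i) j) ->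
     exists z m', m <= m' /\ cyl penc y m z /\ forall j, has_child penc z m' j <-> has_child (me i) w nw j).
  { intros y m i w nw H1 H2. destruct (realize y m i w nw) as [R1 R2].
    - intros j Hj. apply H2. pose proof (pos_ge (f i) j). lia.
    - pose proof (pos_ge (f i) nw). lia.
    - exists (updP y i w), (pos (f i) nw). split; [pose proof (pos_ge (f i) nw); lia|]. split; auto. }
  destruct (classic (exists i, In i Fs /\ NN (me i) (x i) (h i))) as [[i [Hi HNN]]|HnoN].
  - exists N. right; right. intros y m Hm Hy.
    destruct (HNN (y i) (m + h i) ltac:(lia) (Nd y Hy i Hi)) as [w [nw [W1 [W2 W3]]]].
    destruct (Rz y m i w nw ltac:(lia)) as [z [m' [Z1 [Z2 Z3]]]].
    { intros j Hj. apply W2. lia. }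
    exists z, m'. split; auto. split; auto. intros j. apply Z3. auto.
  - assert (IK : forall i, In i Fs -> ISO (me i) (x i) (h i) \/ KK (me i) (x i) (h i)).
    { intros i Hi. destruct (goodi i) as [A|[A|A]]; auto. exfalso; apply HnoN; eauto. }
    destruct (classic ((exists i, In i Fs /\ KK (me i) (x i) (h i)) \/ (forall B', exists i, B' <= f i /\ ~ trivial i)))
      as [HK|HK].
    + exists N. right; left. split.
      * intros y m j Hm Hy Hc. apply child_iff in Hc.
        destruct (inv (fst (Cantor.of_nat m))) as [i|] eqn:E; [|lia].
        destruct (classic (compact i)) as [Cc|Cc]; [eapply Cc; eauto|].
        assert (Hi : In i Fs) by (apply InFs; apply Hnc; auto).
        assert (Em : m = pos (f i) (snd (Cantor.of_nat m))) by (apply inv_Some in E; rewrite E; symmetry; apply pos_fo).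
        assert (Hjj : h i <= snd (Cantor.of_nat m)).
        { apply (pos_le_iff (f i)). rewrite <- Em. pose proof (HN i Hi). simpl in H. lia. }
        destruct (IK i Hi) as [A|[A B]].
        -- eapply (ISO_fb (me i) (M_BR (kk i) (ll i) (mm i))); eauto.
        -- eapply A; eauto.
      * intros y m Hm Hy. destruct HK as [[i [Hi [_ HKi]]]|HB'].
        -- destruct (HKi (y i) (m + h i) ltac:(lia) (Nd y Hy i Hi)) as [w [nw [W1 [W2 [W3 W4]]]]].
           destruct (Rz y m i w nw ltac:(lia)) as [z [m' [Z1 [Z2 Z3]]]].
           { intros j Hj. apply W2. lia. }
           exists z, m'. split; auto. split; auto. split; apply Z3; auto.
        -- destruct (HB' (max m B0)) as [i [Hi Ht]].
           assert (Cc : compact i) by (apply NNPP; intros C; pose proof (Hnc i C); lia).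
           destruct (F2 i Ht Cc) as [w [nw [W1 W2]]].
           destruct (realize y m i w nw) as [R1 R2].
           { intros j Hj. pose proof (pos_ge (f i) j). lia. }
           { pose proof (pos_ge (f i) nw). lia. }
           exists (updP y i w), (pos (f i) nw). split; [pose proof (pos_ge (f i) nw); lia|]. split; auto.
           split; apply R2; auto.
    + assert (Hnt : forall i, ~ trivial i -> f i < B0).
      { destruct Halt as [A|A]; [|exact A]. exfalso. apply HK. right. exact A. }
      exists N. left. intros y y' Hy Hy'. apply functional_extensionality_dep. intros i.
      destruct (classic (trivial i)) as [T|T]; auto.
      assert (Hi : In i Fs) by (apply InFs; auto).
      destruct (IK i Hi) as [A|A].
      * apply A; apply Nd; auto.
      * exfalso. apply HK. left. eauto.
Qed.

Lemma trivial_compact i : trivial i -> compact i.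
Proof.
  intros T v n j Hj. eapply (ISO_fb (me i) (M_BR (kk i) (ll i) (mm i)) v 0 v n j); auto.
  intros a b _ _. apply T. lia. apply cyl_refl.
Qed.

Lemma P_good : forall x : PP, exists n, ISO penc x n \/ KK penc x n \/ NN penc x n.
Proof.
  intros x.
  destruct (classic (forall B, exists i, B <= f i /\ ~ compact i)) as [HA|HA].
  - exists 0. right; right. intros y m _ _. destruct (HA m) as [i [Hi Hc]]. destruct (F1 i Hc) as [w [nw Hw]].
    destruct (realize y m i w nw) as [R1 R2].
    { intros j Hj. pose proof (pos_ge (f i) j). lia. }
    { pose proof (pos_ge (f i) nw). lia. }
    exists (updP y i w), (pos (f i) nw). split; [pose proof (pos_ge (f i) nw); lia|]. split; auto.
    intros j. apply R2. auto.
  - assert (exists B, forall i, ~ compact i -> f i < B) as [B HB].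
    { apply NNPP. intros H. apply HA. intros B. apply NNPP. intros H2. apply H. exists B. intros i Hi.
      destruct (le_lt_dec B (f i)); auto. exfalso. apply H2. eauto. }
    destruct (classic (forall B', exists i, B' <= f i /\ ~ trivial i)) as [HB'|HB'].
    + apply (core B HB (or_introl HB')).
    + assert (exists B', forall i, ~ trivial i -> f i < B') as [B' HB2].
      { apply NNPP. intros H. apply HB'. intros B'. apply NNPP. intros H2. apply H. exists B'. intros i Hi.
        destruct (le_lt_dec B' (f i)); auto. exfalso. apply H2. eauto. }
      apply (core (max B B')).
      * intros i Hi. pose proof (HB i Hi). lia.
      * right. intros i Hi. pose proof (HB2 i Hi). lia.
Qed.
End Prod.


Lemma homeo_trans {A B C : Type} (opA : opens A) (opB : opens B) (opC : opens C) :
  homeomorphic opA opB -> homeomorphic opB opC -> homeomorphic opA opC.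
Proof.
  intros [f1 [g1 [H1 [H2 [H3 H4]]]]] [f2 [g2 [K1 [K2 [K3 K4]]]]].
  exists (fun a => f2 (f1 a)), (fun c => g1 (g2 c)). split; [|split; [|split]].
  - intros a. rewrite K1, H1. auto.
  - intros c. rewrite H2, K2. auto.
  - intros V HV. apply (H3 (fun b => V (f2 b))). apply K3. auto.
  - intros U HU. apply (K4 (fun b => U (g1 b))). apply H4. auto.
Qed.

Lemma prod_cont (I : Type) (X Y : I -> Type) (opX : forall i, opens (X i)) (opY : forall i, opens (Y i))
  (h : forall i, X i -> Y i) (Hh : forall i, continuous (opX i) (opY i) (h i)) :
  continuous (prod_open X opX) (prod_open Y opY) (fun x i => h i (x i)).
Proof.
  intros V HV x Hx. destruct (HV _ Hx) as [F [W [W1 [W2 W3]]]].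
  exists F, (fun i a => W i (h i a)). split; [|split].
  - intros i Hi. apply Hh. auto.
  - intros i Hi. apply W2; auto.
  - intros y Hy. apply W3. auto.
Qed.

Theorem mainTheorem2 (I : Type) (HI : countable I)
  (X : I -> Type) (op : forall i, opens (X i))
  (Htop : forall i, is_topology (op i))
  (HC : forall i, in_C (op i)) :
  in_C (prod_open X op).
Proof.
  destruct HI as [f Hf].
  assert (HC' : forall i, exists t : option nat * option nat * option nat,
     homeomorphic (op i) (model_open (fst (fst t)) (snd (fst t)) (snd t))).
  { intros i. destruct (HC i) as [k [l [m H]]]. exists (k, l, m). exact H. }
  set (t := fun i => proj1_sig (constructive_indefinite_description _ (HC' i))).
  set (kk := fun i => fst (fst (t i))). set (ll := fun i => snd (fst (t i))). set (mm := fun i => snd (t i)).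
  assert (Ht : forall i, homeomorphic (op i) (model_open (kk i) (ll i) (mm i))).
  { intros i. unfold kk, ll, mm, t. exact (proj2_sig (constructive_indefinite_description _ (HC' i))). }
  assert (Hp : homeomorphic (prod_open X op) (Pop I kk ll mm)).
  { assert (Hfg : forall i, exists fg : (X i -> MM I kk ll mm i) * (MM I kk ll mm i -> X i),
       (forall a, snd fg (fst fg a) = a) /\ (forall b, fst fg (snd fg b) = b) /\
       continuous (op i) (model_open (kk i) (ll i) (mm i)) (fst fg) /\
       continuous (model_open (kk i) (ll i) (mm i)) (op i) (snd fg)).
    { intros i. destruct (Ht i) as [g1 [g2 H]]. exists (g1, g2). exact H. }
    set (fg := fun i => proj1_sig (constructive_indefinite_description _ (Hfg i))).
    assert (Hfg' : forall i, _) by (intros i; exact (proj2_sig (constructive_indefinite_description _ (Hfg i)))).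
    exists (fun x i => fst (fg i) (x i)), (fun y i => snd (fg i) (y i)). split; [|split; [|split]].
    - intros x. apply functional_extensionality_dep. intros i. apply (Hfg' i).
    - intros y. apply functional_extensionality_dep. intros i. apply (Hfg' i).
    - apply prod_cont. intros i. apply (Hfg' i).
    - apply prod_cont. intros i. apply (Hfg' i). }
  assert (Hm : in_C (Pop I kk ll mm)).
  { apply (classify (PP I kk ll mm) (Pop I kk ll mm) (penc I f kk ll mm)).
    - apply P_open; auto.
    - apply P_inj; auto.
    - apply P_E3; auto.
    - apply P_BR; auto.
    - intros x. apply P_good; auto. }
  destruct Hm as [k [l [m Hm]]]. exists k, l, m. eapply homeo_trans; eauto.
Qed.
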